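(* Let $n\ge3$, $B$ the closed unit disc, and let $X\in C^3(B,\mathbb R^n)$ be a conformally parametrized ($X_u\cdot X_u=W=X_v\cdot X_v$, $X_u\cdot X_v=0$) minimal immersion with flat normal bundle, i.e. there is a $C^2$ orthonormal normal section $\{N_1,\dots,N_{n-2}\}$ whose torsion coefficients all vanish. Assume $X$ is stable: for every $C^2$ unit normal field $N$ along $X$ and every $\varphi\in C_0^\infty(B,\mathbb R)$, $\frac{d^2}{d\varepsilon^2}\mathcal A[X+\varepsilon\varphi N]\big|_{\varepsilon=0}\ge0$, where $\mathcal A[Y]=\iint_B\sqrt{\det(Y_{u^i}\cdot Y_{u^j})}\,dudv$. Let $K$ be the Gaussian curvature of $X$. Then for every $\mu$ with $0<\mu\le\frac{2}{n-2}$, $$\iint_B|\nabla\varphi|^2\,dudv\ge\mu\iint_B(-K)W\varphi^2\,dudv\quad\text{for all }\varphi\in C_0^\infty(B,\mathbb R).$$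
   Context: Orthonormal normal section: $N_\sigma\in C^2(B,\mathbb R^n)$ with $X_{u^i}\cdot N_\sigma=0$, $N_\sigma\cdot N_\omega=\delta_{\sigma\omega}$; torsion coefficients $T^\omega_{\sigma,i}=N_{\sigma,u^i}\cdot N_\omega$ ($\sigma\ne\omega$). With $L_{\sigma,ij}=X_{u^iu^j}\cdot N_\sigma$: minimal means $L_{\sigma,11}+L_{\sigma,22}=0$ for all $\sigma$; $K:=\sum_\sigma(L_{\sigma,11}L_{\sigma,22}-L_{\sigma,12}^2)/W^2$ (independent of the section), and $K\le0$ for minimal $X$. *)

(* Defs.v *)
From Stdlib Require Import Reals List.
From Coquelicot Require Import Coquelicot.
Open Scope R_scope.

(** Vectors of R^n are represented as maps [nat -> R]; only components
    [0 .. n-1] are ever used. *)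
Definition dotn (n : nat) (a b : nat -> R) : R :=
  fold_right Rplus 0 (map (fun k => a k * b k) (seq 0 n)).

Definition pu (f : R -> R -> R) : R -> R -> R :=
  fun u v => Derive (fun t => f t v) u.
Definition pv (f : R -> R -> R) : R -> R -> R :=
  fun u v => Derive (fun t => f u t) v.
Definition pd (d : bool) (f : R -> R -> R) := if d then pv f else pu f.
Definition pds (l : list bool) (f : R -> R -> R) : R -> R -> R :=
  fold_right pd f l.

Definition uncurry2 (f : R -> R -> R) : R * R -> R := fun p => f (fst p) (snd p).

Definition Ck_on (k : nat) (U : R -> R -> Prop) (f : R -> R -> R) : Prop :=
  forall l : list bool, (length l <= k)%nat -> forall u v, U u v ->
    continuous (uncurry2 (pds l f)) (u, v) /\
    ((length l < k)%nat ->
       ex_derive (fun t => pds l f t v) u /\ ex_derive (fun t => pds l f u t) v).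

Definition inB (u v : R) : Prop := u ^ 2 + v ^ 2 <= 1.

(** C^k(B): C^k on an open disc containing the closed unit disc B
    (equivalent, by the Whitney/Stein extension theorem, to the usual
    "derivatives up to order k extend continuously to B"). *)
Definition CkB (k : nat) (f : R -> R -> R) : Prop :=
  exists rho, 1 < rho /\ Ck_on k (fun u v => u ^ 2 + v ^ 2 < rho ^ 2) f.

Definition CkBvec (k n : nat) (X : R -> R -> nat -> R) : Prop :=
  forall j, (j < n)%nat -> CkB k (fun u v => X u v j).

Definition C0inf (phi : R -> R -> R) : Prop :=
  (forall (l : list bool) u v,
      continuous (uncurry2 (pds l phi)) (u, v) /\
      ex_derive (fun t => pds l phi t v) u /\ ex_derive (fun t => pds l phi u t) v) /\
  (exists r, 0 <= r < 1 /\ forall u v, r ^ 2 <= u ^ 2 + v ^ 2 -> phi u v = 0).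

Definition Vu (X : R -> R -> nat -> R) (u v : R) : nat -> R :=
  fun j => pu (fun a b => X a b j) u v.
Definition Vv (X : R -> R -> nat -> R) (u v : R) : nat -> R :=
  fun j => pv (fun a b => X a b j) u v.
Definition Vuu X u v : nat -> R := fun j => pu (pu (fun a b => X a b j)) u v.
Definition Vuv X u v : nat -> R := fun j => pv (pu (fun a b => X a b j)) u v.
Definition Vvv X u v : nat -> R := fun j => pv (pv (fun a b => X a b j)) u v.

Definition IntB (f : R -> R -> R) : R :=
  RInt (fun u => RInt (fun v => f u v) (- sqrt (1 - u ^ 2)) (sqrt (1 - u ^ 2))) (-1) 1.

Definition Wf (n : nat) X u v : R := dotn n (Vu X u v) (Vu X u v).

Definition Area (n : nat) (Y : R -> R -> nat -> R) : R :=
  IntB (fun u v =>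
    sqrt (dotn n (Vu Y u v) (Vu Y u v) * dotn n (Vv Y u v) (Vv Y u v)
          - (dotn n (Vu Y u v) (Vv Y u v)) ^ 2)).

Definition L11 n X (Nf : nat -> R -> R -> nat -> R) s u v := dotn n (Vuu X u v) (Nf s u v).
Definition L12 n X (Nf : nat -> R -> R -> nat -> R) s u v := dotn n (Vuv X u v) (Nf s u v).
Definition L22 n X (Nf : nat -> R -> R -> nat -> R) s u v := dotn n (Vvv X u v) (Nf s u v).

Definition GaussK (n : nat) X Nf u v : R :=
  fold_right Rplus 0
    (map (fun s => (L11 n X Nf s u v * L22 n X Nf s u v - (L12 n X Nf s u v) ^ 2)
                   / (Wf n X u v) ^ 2)
         (seq 0 (n - 2))).

Definition vary (X : R -> R -> nat -> R) (eps : R) (phi : R -> R -> R)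
  (N : R -> R -> nat -> R) : R -> R -> nat -> R :=
  fun u v j => X u v j + eps * phi u v * N u v j.

(* Main.v *)
Require Import Defs.
From Stdlib Require Import Reals List.
From Coquelicot Require Import Coquelicot.
From Stdlib Require Import Lra Lia Classical ClassicalEpsilon.
Open Scope R_scope.

Ltac fixeq := match goal with |- @eq _ ?a ?b => change (@eq R a b) end.

Lemma ball_R (x y e : R) : ball x e y <-> Rabs (y - x) < e.
Proof. reflexivity. Qed.

Lemma param_cont {U : UniformSpace} (h : U -> R -> R) (p0 : U) (a b : R) :
  a <= b ->
  (forall t, a <= t <= b -> continuous (fun z : U * R => h (fst z) (snd z)) (p0, t)) ->
  locally p0 (fun p => ex_RInt (h p) a b) ->
  continuous (fun p => RInt (h p) a b) p0.
Proof.
intros Hab Hc Hex.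
apply filterlim_locally. intros eps.
set (e' := eps / (2 * (b - a + 1))).
assert (He' : 0 < e'). { unfold e'. apply Rdiv_lt_0_compat. apply eps. lra. }
assert (Hd : forall t, exists d : posreal, a <= t <= b ->
   forall p t', ball p0 d p -> ball t d t' -> Rabs (h p t' - h p0 t) < e').
{ intros t. destruct (classic (a <= t <= b)) as [Ht|Ht].
  - specialize (Hc t Ht). unfold continuous in Hc. rewrite filterlim_locally in Hc.
    destruct (Hc (mkposreal _ He')) as [d Hd].
    exists d. intros _ p t' H1 H2. apply (Hd (p, t')). split; assumption.
  - exists (mkposreal 1 Rlt_0_1). intros H; contradiction. }
set (df := fun t => proj1_sig (constructive_indefinite_description _ (Hd t))).
assert (Hdf : forall t, a <= t <= b ->
   forall p t', ball p0 (df t) p -> ball t (df t) t' -> Rabs (h p t' - h p0 t) < e').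
{ intros t. unfold df. destruct (constructive_indefinite_description _ (Hd t)) as [d Hd']. exact Hd'. }
destruct (compactness_value_1d a b df) as [d Hcomp].
assert (Hunif : forall p, ball p0 d p -> forall t', a <= t' <= b -> Rabs (h p t' - h p0 t') <= 2 * e').
{ intros p Hp t' Ht'. specialize (Hcomp t' Ht').
  destruct (classic (Rabs (h p t' - h p0 t') <= 2 * e')) as [G|G]; [exact G|].
  exfalso. apply Hcomp. intros [t [Ht [Hdt Hle]]].
  apply G.
  assert (A1 := Hdf t Ht p t' (ball_le _ _ _ Hle _ Hp) ltac:(apply ball_R; exact Hdt)).
  assert (A2 := Hdf t Ht p0 t' (ball_center _ _) ltac:(apply ball_R; exact Hdt)).
  replace (h p t' - h p0 t') with ((h p t' - h p0 t) - (h p0 t' - h p0 t)) by ring.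
  eapply Rle_trans. apply Rabs_triang. rewrite Rabs_Ropp. lra. }
assert (Hl : locally p0 (fun p => ball p0 d p)) by (exists d; auto).
generalize (filter_and _ _ Hl Hex). apply filter_imp. intros p [Hp Hexp].
apply ball_R.
assert (Hex0 : ex_RInt (h p0) a b) by (apply locally_singleton in Hex; exact Hex).
assert (E : RInt (h p) a b - RInt (h p0) a b = RInt (fun t => h p t - h p0 t) a b).
{ symmetry. apply (RInt_minus (h p) (h p0) a b Hexp Hex0). }
rewrite E.
eapply Rle_lt_trans. apply abs_RInt_le_const with (M := 2 * e').
- exact Hab.
- apply (ex_RInt_minus (h p) (h p0) a b Hexp Hex0).
- intros t Ht. apply Hunif; assumption.
- unfold e'. apply Rmult_lt_reg_r with (2 * (b - a + 1)). lra.
  field_simplify; try lra. destruct eps as [eps Heps]; simpl. nra.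
Qed.

Definition cont3 (h : R -> R -> R -> R) (e u w : R) : Prop :=
  continuous (fun z : (R * R) * R => h (fst (fst z)) (snd (fst z)) (snd z)) ((e, u), w).

Definition SQ (h : R -> R -> R) : R := RInt (fun u => RInt (h u) (-1) 1) (-1) 1.

Lemma continuous_pair {T U V : UniformSpace} (f : T -> U) (g : T -> V) (x : T) :
  continuous f x -> continuous g x -> continuous (fun y => (f y, g y)) x.
Proof.
intros Hf Hg.
apply (continuous_comp_2 f g (fun a b => (a, b))); auto.
apply (continuous_ext (fun z => z)). intros [a b]; reflexivity.
apply continuous_id.
Qed.

Lemma locally_abs_lt (d : posreal) (e : R) : Rabs e < d -> locally e (fun x => Rabs x < d).
Proof.
intros H. assert (Hp : 0 < d - Rabs e) by lra.
exists (mkposreal _ Hp). intros y Hy. change (Rabs (y - e) < d - Rabs e) in Hy.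
assert (Rabs y <= Rabs e + Rabs (y - e)).
{ replace y with (e + (y - e)) at 1 by ring. apply Rabs_triang. }
lra.
Qed.

Lemma cont3_ew h e u w : cont3 h e u w ->
  continuity_2d_pt (fun x v => h x u v) e w.
Proof.
intros H. apply continuity_2d_pt_filterlim.
apply (continuous_comp (fun z : R * R => ((fst z, u), snd z))
   (fun z : (R * R) * R => h (fst (fst z)) (snd (fst z)) (snd z)) (e, w)); [|exact H].
apply continuous_pair. apply continuous_pair. apply continuous_fst. apply continuous_const.
apply continuous_snd.
Qed.

Lemma cont3_uw h e u w : cont3 h e u w ->
  continuous (fun z : R * R => h e (fst z) (snd z)) (u, w).
Proof.
intros H.
apply (continuous_comp (fun z : R * R => ((e, fst z), snd z))
   (fun z : (R * R) * R => h (fst (fst z)) (snd (fst z)) (snd z)) (u, w)); [|exact H].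
apply continuous_pair. apply continuous_pair. apply continuous_const. apply continuous_fst.
apply continuous_snd.
Qed.

Lemma cont3_w h e u w : cont3 h e u w -> continuous (fun v => h e u v) w.
Proof.
intros H.
apply (continuous_comp (fun v : R => ((e, u), v))
   (fun z : (R * R) * R => h (fst (fst z)) (snd (fst z)) (snd z)) w); [|exact H].
apply continuous_pair. apply continuous_const. apply continuous_id.
Qed.

Lemma SQ_derive (G G1 : R -> R -> R -> R) (d : posreal) (e0 : R) :
  Rabs e0 < d ->
  (forall e u w, Rabs e < d -> is_derive (fun x => G x u w) e (G1 e u w)) ->
  (forall e u w, Rabs e < d -> cont3 G e u w) ->
  (forall e u w, Rabs e < d -> cont3 G1 e u w) ->
  is_derive (fun e => SQ (G e)) e0 (SQ (G1 e0)).
Proof.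
intros He0 HD HG HG1.
assert (Hm : Rmin (-1) 1 = -1 /\ Rmax (-1) 1 = 1).
{ split; [apply Rmin_left|apply Rmax_right]; lra. }
assert (Hex : forall e u, Rabs e < d -> ex_RInt (G e u) (-1) 1).
{ intros e u He. apply (ex_RInt_continuous (V := R_CompleteNormedModule)). intros z _. apply cont3_w. apply HG; auto. }
assert (Hex1 : forall e u, Rabs e < d -> ex_RInt (G1 e u) (-1) 1).
{ intros e u He. apply (ex_RInt_continuous (V := R_CompleteNormedModule)). intros z _. apply cont3_w. apply HG1; auto. }
assert (Step1 : forall e u, Rabs e < d ->
  is_derive (fun x => RInt (G x u) (-1) 1) e (RInt (G1 e u) (-1) 1)).
{ intros e u He.
  assert (Hder : forall x v, Rabs x < d -> Derive (fun z => G z u v) x = G1 x u v).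
  { intros x v Hx. apply is_derive_unique. apply HD; auto. }
  replace (RInt (G1 e u) (-1) 1) with (RInt (fun t => Derive (fun z => G z u t) e) (-1) 1).
  2: { apply RInt_ext. intros x _. apply Hder; auto. }
  apply (is_derive_RInt_param (fun x t => G x u t)).
  - generalize (locally_abs_lt d e He). apply filter_imp. intros x Hx t _.
    eexists. apply HD; auto.
  - intros t _. apply continuity_2d_pt_ext_loc with (fun x v => G1 x u v).
    + assert (Hp : 0 < d - Rabs e) by lra.
      exists (mkposreal _ Hp). intros x v Hx _. simpl in Hx. symmetry. apply Hder.
      assert (Rabs x <= Rabs e + Rabs (x - e)).
      { replace x with (e + (x - e)) at 1 by ring. apply Rabs_triang. }
      lra.
    + apply cont3_ew. apply HG1; auto.
  - generalize (locally_abs_lt d e He). apply filter_imp. intros x Hx. apply Hex; auto. }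
unfold SQ.
assert (HderI : forall x u, Rabs x < d ->
   Derive (fun z => RInt (G z u) (-1) 1) x = RInt (G1 x u) (-1) 1).
{ intros x u Hx. apply is_derive_unique. apply Step1; auto. }
replace (RInt (fun u => RInt (G1 e0 u) (-1) 1) (-1) 1) with
  (RInt (fun t => Derive (fun z => RInt (G z t) (-1) 1) e0) (-1) 1).
2: { apply RInt_ext. intros x _. apply HderI; auto. }
apply (is_derive_RInt_param (fun x t => RInt (G x t) (-1) 1)).
- generalize (locally_abs_lt d e0 He0). apply filter_imp. intros x Hx t _.
  eexists. apply Step1; auto.
- intros t _. apply continuity_2d_pt_ext_loc with (fun x u => RInt (G1 x u) (-1) 1).
  + assert (Hp : 0 < d - Rabs e0) by lra.
    exists (mkposreal _ Hp). intros x v Hx _. simpl in Hx. symmetry. apply HderI.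
    assert (Rabs x <= Rabs e0 + Rabs (x - e0)).
    { replace x with (e0 + (x - e0)) at 1 by ring. apply Rabs_triang. }
    lra.
  + apply continuity_2d_pt_filterlim.
    apply (param_cont (U := prod_UniformSpace R_UniformSpace R_UniformSpace)
             (fun p t => G1 (fst p) (snd p) t) (e0, t) (-1) 1).
    * lra.
    * intros t' _. apply HG1; auto.
    * assert (Hp : 0 < d - Rabs e0) by lra.
      exists (mkposreal _ Hp). intros [x u] [Hx _]. apply Hex1. simpl.
      change (Rabs (x - e0) < d - Rabs e0) in Hx.
      assert (Rabs x <= Rabs e0 + Rabs (x - e0)).
      { replace x with (e0 + (x - e0)) at 1 by ring. apply Rabs_triang. }
      lra.
- generalize (locally_abs_lt d e0 He0). apply filter_imp. intros x Hx.
  apply (ex_RInt_continuous (V := R_CompleteNormedModule)). intros u _.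
  apply (param_cont (U := R_UniformSpace) (G x) u (-1) 1).
  + lra.
  + intros t _. apply cont3_uw. apply HG; auto.
  + apply filter_forall. intros p. apply Hex; auto.
Qed.

Definition sB (u : R) : R := sqrt (1 - u ^ 2).
Definition cl (w : R) : R := Rmax (-1) (Rmin 1 w).
Definition TB (g : R -> R -> R) (u w : R) : R := sB u * g (cl u) (sB u * cl w).

Lemma cl_id w : -1 <= w <= 1 -> cl w = w.
Proof. intros H. unfold cl, Rmax, Rmin. repeat destruct Rle_dec; lra. Qed.

Lemma cl_bound w : -1 <= cl w <= 1.
Proof. unfold cl, Rmax, Rmin. repeat destruct Rle_dec; lra. Qed.

Lemma cl_lip a b : Rabs (cl a - cl b) <= Rabs (a - b).
Proof.
unfold cl, Rmax, Rmin. repeat destruct Rle_dec;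
  repeat (rewrite Rabs_left1 by lra || rewrite Rabs_pos_eq by lra); try lra;
  unfold Rabs; repeat destruct Rcase_abs; lra.
Qed.

Lemma continuous_cl w : continuous cl w.
Proof.
apply filterlim_locally. intros eps. exists eps. intros y Hy.
change (Rabs (cl y - cl w) < eps). change (Rabs (y - w) < eps) in Hy.
eapply Rle_lt_trans. apply cl_lip. exact Hy.
Qed.

Lemma continuous_sB u : continuous sB u.
Proof.
unfold sB. apply continuous_sqrt_comp.
apply (continuous_minus (fun _ => 1) (fun x => x ^ 2)).
apply continuous_const.
simpl. apply (continuous_mult (fun x => x) (fun x => x * 1)). apply continuous_id.
apply (continuous_mult (fun x => x) (fun _ => 1)). apply continuous_id. apply continuous_const.
Qed.

Lemma sB_pos u : 0 <= sB u.
Proof. apply sqrt_pos. Qed.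

Lemma sB_sq u : -1 <= u <= 1 -> sB u * sB u = 1 - u ^ 2.
Proof. intros H. unfold sB. apply sqrt_sqrt. nra. Qed.

Lemma sB_out u : 1 <= Rabs u -> sB u = 0.
Proof. intros H. unfold sB. apply sqrt_neg_0.
  destruct (Rle_dec 0 u). rewrite Rabs_pos_eq in H; nra. rewrite Rabs_left in H; nra. Qed.

Lemma inB_TB u w : inB (cl u) (sB u * cl w).
Proof.
unfold inB. destruct (Rle_dec (Rabs u) 1) as [H|H].
- assert (Hu : -1 <= u <= 1) by (apply Rabs_le_between; exact H).
  rewrite (cl_id u Hu).
  assert (Hw := cl_bound w).
  replace ((sB u * cl w) ^ 2) with ((sB u * sB u) * (cl w * cl w)) by ring.
  rewrite sB_sq by exact Hu.
  assert (0 <= 1 - u ^ 2) by nra.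
  assert (cl w * cl w <= 1) by nra. nra.
- rewrite sB_out by lra. assert (Hc := cl_bound u). nra.
Qed.

Lemma TB_cont g : (forall u v, inB u v -> continuous (uncurry2 g) (u, v)) ->
  forall u w, continuous (fun z : R * R => TB g (fst z) (snd z)) (u, w).
Proof.
intros Hg u w. unfold TB.
apply (continuous_mult (fun z : R * R => sB (fst z))
   (fun z : R * R => g (cl (fst z)) (sB (fst z) * cl (snd z)))).
- apply (continuous_comp fst sB). apply continuous_fst. apply continuous_sB.
- apply (continuous_comp (fun z : R * R => (cl (fst z), sB (fst z) * cl (snd z))) (uncurry2 g) (u, w)).
  + apply continuous_pair.
    * apply (continuous_comp fst cl). apply continuous_fst. apply continuous_cl.
    * apply (continuous_mult (fun z : R * R => sB (fst z)) (fun z : R * R => cl (snd z))).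
      apply (continuous_comp fst sB). apply continuous_fst. apply continuous_sB.
      apply (continuous_comp snd cl). apply continuous_snd. apply continuous_cl.
  + apply Hg. apply inB_TB.
Qed.

Lemma cont2_slice2 (h : R -> R -> R) u w :
  continuous (fun z : R * R => h (fst z) (snd z)) (u, w) -> continuous (h u) w.
Proof.
intros H. apply (continuous_comp (fun v : R => (u, v)) (fun z : R * R => h (fst z) (snd z)) w); [|exact H].
apply continuous_pair. apply continuous_const. apply continuous_id.
Qed.

Lemma IntB_SQ g : (forall u v, inB u v -> continuous (uncurry2 g) (u, v)) ->
  IntB g = SQ (TB g).
Proof.
intros Hg. unfold IntB, SQ. apply RInt_ext. intros u Hu.
rewrite Rmin_left in Hu by lra. rewrite Rmax_right in Hu by lra.
assert (Hu' : -1 <= u <= 1) by lra.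
transitivity (RInt (fun w => scal (sB u) (g u (sB u * w + 0))) (-1) 1).
2: { apply RInt_ext. intros w Hw. rewrite Rmin_left in Hw by lra. rewrite Rmax_right in Hw by lra.
     unfold TB. rewrite cl_id by lra. rewrite cl_id by lra. rewrite Rplus_0_r. reflexivity. }
transitivity (RInt (g u) (sB u * -1 + 0) (sB u * 1 + 0)).
{ unfold sB. f_equal; ring. }
symmetry. apply (RInt_comp_lin (V := R_CompleteNormedModule) (g u) (sB u) 0 (-1) 1).
- apply (ex_RInt_continuous (V := R_CompleteNormedModule)). intros z Hz.
  apply (cont2_slice2 g u z). apply Hg.
  assert (Hs := sB_pos u). assert (Hs2 := sB_sq u Hu').
  replace (sB u * -1 + 0) with (- sB u) in Hz by ring.
  replace (sB u * 1 + 0) with (sB u) in Hz by ring.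
  rewrite Rmin_left in Hz by lra. rewrite Rmax_right in Hz by lra.
  unfold inB. assert (z * z <= sB u * sB u) by nra. nra.
Qed.

Definition cont2all (h : R -> R -> R) : Prop :=
  forall u w, continuous (fun z : R * R => h (fst z) (snd z)) (u, w).

Lemma SQ_ex_in h : cont2all h -> forall u, ex_RInt (h u) (-1) 1.
Proof.
intros H u. apply (ex_RInt_continuous (V := R_CompleteNormedModule)). intros z _.
apply cont2_slice2. apply H.
Qed.

Lemma SQ_ex_out h : cont2all h -> ex_RInt (fun u => RInt (h u) (-1) 1) (-1) 1.
Proof.
intros H. apply (ex_RInt_continuous (V := R_CompleteNormedModule)). intros u _.
apply (param_cont (U := R_UniformSpace) h u (-1) 1). lra.
intros t _. apply H. apply filter_forall. apply SQ_ex_in. exact H.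
Qed.

Lemma cont2all_plus h1 h2 : cont2all h1 -> cont2all h2 -> cont2all (fun u w => h1 u w + h2 u w).
Proof. intros H1 H2 u w. apply (continuous_plus (fun z : R * R => h1 (fst z) (snd z)) (fun z : R * R => h2 (fst z) (snd z))); auto. Qed.

Lemma cont2all_scal k h : cont2all h -> cont2all (fun u w => k * h u w).
Proof. intros H u w. apply (continuous_mult (fun z : R * R => k) (fun z : R * R => h (fst z) (snd z))); auto. apply continuous_const. Qed.

Lemma SQ_plus h1 h2 : cont2all h1 -> cont2all h2 ->
  SQ (fun u w => h1 u w + h2 u w) = SQ h1 + SQ h2.
Proof.
intros H1 H2. unfold SQ.
transitivity (RInt (fun u => RInt (h1 u) (-1) 1 + RInt (h2 u) (-1) 1) (-1) 1).
{ apply RInt_ext. intros u _. apply (RInt_plus (V := R_CompleteNormedModule)); apply SQ_ex_in; auto. }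
apply (RInt_plus (V := R_CompleteNormedModule)
  (fun u => RInt (h1 u) (-1) 1) (fun u => RInt (h2 u) (-1) 1)); apply SQ_ex_out; auto.
Qed.

Lemma SQ_scal k h : cont2all h -> SQ (fun u w => k * h u w) = k * SQ h.
Proof.
intros H. unfold SQ.
transitivity (RInt (fun u => k * RInt (h u) (-1) 1) (-1) 1).
{ apply RInt_ext. intros u _. apply (RInt_scal (V := R_CompleteNormedModule)); apply SQ_ex_in; auto. }
apply (RInt_scal (V := R_CompleteNormedModule) (fun u => RInt (h u) (-1) 1)). apply SQ_ex_out; auto.
Qed.

Lemma SQ_ge0 h : cont2all h -> (forall u w, -1 < u < 1 -> -1 < w < 1 -> 0 <= h u w) -> 0 <= SQ h.
Proof.
intros H Hp. unfold SQ. apply RInt_ge_0. lra. apply SQ_ex_out; auto.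
intros u Hu. apply RInt_ge_0. lra. apply SQ_ex_in; auto. intros w Hw. apply Hp; auto.
Qed.

Definition contB (g : R -> R -> R) : Prop :=
  forall u v, inB u v -> continuous (uncurry2 g) (u, v).

Lemma contB_TB g : contB g -> cont2all (TB g).
Proof. intros H u w. apply TB_cont. exact H. Qed.

Lemma contB_plus g1 g2 : contB g1 -> contB g2 -> contB (fun u v => g1 u v + g2 u v).
Proof. intros H1 H2 u v Huv. apply (continuous_plus (uncurry2 g1) (uncurry2 g2)); auto. Qed.

Lemma contB_scal k g : contB g -> contB (fun u v => k * g u v).
Proof. intros H u v Huv. apply (continuous_mult (fun _ => k) (uncurry2 g)); auto. apply continuous_const. Qed.

Lemma IntB_plus g1 g2 : contB g1 -> contB g2 ->
  IntB (fun u v => g1 u v + g2 u v) = IntB g1 + IntB g2.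
Proof.
intros H1 H2. rewrite !IntB_SQ; auto. 2: apply contB_plus; auto.
rewrite <- SQ_plus by (apply contB_TB; auto).
unfold SQ. apply RInt_ext. intros u _. apply RInt_ext. intros w _. unfold TB. fixeq. ring.
Qed.

Lemma IntB_scal k g : contB g -> IntB (fun u v => k * g u v) = k * IntB g.
Proof.
intros H. rewrite !IntB_SQ; auto. 2: apply contB_scal; auto.
rewrite <- SQ_scal by (apply contB_TB; auto).
unfold SQ. apply RInt_ext. intros u _. apply RInt_ext. intros w _. unfold TB. fixeq. ring.
Qed.

Lemma IntB_ge0 g : contB g -> (forall u v, inB u v -> 0 <= g u v) -> 0 <= IntB g.
Proof.
intros H Hp. rewrite IntB_SQ; auto. apply SQ_ge0. apply contB_TB; auto.
intros u w _ _. unfold TB. apply Rmult_le_pos. apply sB_pos. apply Hp. apply inB_TB.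
Qed.

Lemma IntB_ext g1 g2 : (forall u v, inB u v -> g1 u v = g2 u v) -> IntB g1 = IntB g2.
Proof.
intros H. unfold IntB. apply RInt_ext. intros u Hu.
rewrite Rmin_left in Hu by lra. rewrite Rmax_right in Hu by lra.
apply RInt_ext. intros v Hv.
assert (Hs := sqrt_pos (1 - u ^ 2)).
rewrite Rmin_left in Hv by lra. rewrite Rmax_right in Hv by lra.
apply H. unfold inB.
assert (Hs2 : sqrt (1 - u ^ 2) * sqrt (1 - u ^ 2) = 1 - u ^ 2) by (apply sqrt_sqrt; nra).
nra.
Qed.

Definition sumf (l : list nat) (f : nat -> R) : R := fold_right Rplus 0 (map f l).

Lemma contB_sumf (l : list nat) (g : nat -> R -> R -> R) :
  (forall s, In s l -> contB (g s)) -> contB (fun u v => sumf l (fun s => g s u v)).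
Proof.
induction l as [|a l IH]; intros H u v Huv; simpl.
- apply continuous_const.
- apply (continuous_plus (uncurry2 (g a)) (uncurry2 (fun u v => sumf l (fun s => g s u v)))).
  apply H; simpl; auto. apply IH; auto. intros s Hs; apply H; simpl; auto.
Qed.

Lemma RInt_zero a b : RInt (fun _ => 0) a b = 0.
Proof. rewrite RInt_const. unfold scal; simpl. unfold mult; simpl. ring. Qed.

Lemma IntB_sumf (l : list nat) (g : nat -> R -> R -> R) :
  (forall s, In s l -> contB (g s)) ->
  IntB (fun u v => sumf l (fun s => g s u v)) = sumf l (fun s => IntB (g s)).
Proof.
induction l as [|a l IH]; intros H.
- unfold IntB, sumf; simpl. transitivity (RInt (fun _ => 0) (-1) 1).
  + apply RInt_ext. intros u _. apply RInt_zero.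
  + apply RInt_zero.
- change (IntB (fun u v => g a u v + sumf l (fun s => g s u v)) = IntB (g a) + sumf l (fun s => IntB (g s))).
  rewrite (IntB_plus (g a) (fun u v => sumf l (fun s => g s u v))).
  rewrite IH. reflexivity. intros s Hs; apply H; simpl; auto.
  apply H; simpl; auto. apply contB_sumf. intros s Hs; apply H; simpl; auto.
Qed.

Lemma unif_pos (F : R -> R -> R -> R) :
  (forall u w, -1 <= u <= 1 -> -1 <= w <= 1 -> cont3 F 0 u w /\ 0 < F 0 u w) ->
  exists d : posreal, forall e u w, Rabs e < d -> -1 <= u <= 1 -> -1 <= w <= 1 -> 0 < F e u w.
Proof.
intros H.
assert (Hd : forall u w, exists d : posreal, -1 <= u <= 1 -> -1 <= w <= 1 ->
  forall e u' w', Rabs e < d -> Rabs (u' - u) < d -> Rabs (w' - w) < d -> 0 < F e u' w').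
{ intros u w. destruct (classic (-1 <= u <= 1 /\ -1 <= w <= 1)) as [[Hu Hw]|Hn].
  - destruct (H u w Hu Hw) as [Hc Hp].
    unfold cont3, continuous in Hc. rewrite filterlim_locally in Hc.
    destruct (Hc (mkposreal _ Hp)) as [d Hd].
    exists d. intros _ _ e u' w' He Hu' Hw'.
    assert (Hb := Hd ((e, u'), w')). simpl in Hb.
    assert (B : Rabs (F e u' w' - F 0 u w) < F 0 u w).
    { apply Hb. split; [split|].
      - change (Rabs (e - 0) < d). rewrite Rminus_0_r. exact He.
      - exact Hu'.
      - exact Hw'. }
    apply Rabs_def2 in B. lra.
  - exists (mkposreal 1 Rlt_0_1). intros Hu Hw. exfalso. apply Hn; auto. }
set (df := fun u w => proj1_sig (constructive_indefinite_description _ (Hd u w))).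
assert (Hdf : forall u w, -1 <= u <= 1 -> -1 <= w <= 1 ->
  forall e u' w', Rabs e < df u w -> Rabs (u' - u) < df u w -> Rabs (w' - w) < df u w -> 0 < F e u' w').
{ intros u w. unfold df. destruct (constructive_indefinite_description _ (Hd u w)) as [d Hd']. exact Hd'. }
destruct (compactness_value_2d (-1) 1 (-1) 1 df) as [d Hcomp].
exists d. intros e u' w' He Hu' Hw'.
specialize (Hcomp u' w' Hu' Hw').
destruct (classic (0 < F e u' w')) as [G|G]; [exact G|]. exfalso.
apply Hcomp. intros [u [w [Hu [Hw [H1 [H2 H3]]]]]].
apply G. apply (Hdf u w Hu Hw); auto. lra.
Qed.

Definition Ee (c : nat -> R) e := c 0%nat + c 1%nat * e + c 2%nat * e ^ 2.
Definition Ge (c : nat -> R) e := c 3%nat + c 4%nat * e + c 5%nat * e ^ 2.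
Definition Fe (c : nat -> R) e := c 6%nat + c 7%nat * e + c 8%nat * e ^ 2.
Definition Pp c e := Ee c e * Ge c e - Fe c e ^ 2.
Definition P1p c e := (c 1%nat + 2 * c 2%nat * e) * Ge c e + Ee c e * (c 4%nat + 2 * c 5%nat * e)
   - 2 * Fe c e * (c 7%nat + 2 * c 8%nat * e).
Definition P2p c e := 2 * c 2%nat * Ge c e + 2 * (c 1%nat + 2 * c 2%nat * e) * (c 4%nat + 2 * c 5%nat * e)
   + 2 * c 5%nat * Ee c e - 2 * (c 7%nat + 2 * c 8%nat * e) ^ 2 - 4 * c 8%nat * Fe c e.
Definition D1p c e := P1p c e / (2 * sqrt (Pp c e)).
Definition D2p c e := P2p c e / (2 * sqrt (Pp c e)) - P1p c e ^ 2 / (4 * Pp c e * sqrt (Pp c e)).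

Lemma Pp_der c e : is_derive (Pp c) e (P1p c e).
Proof. unfold Pp, P1p, Ee, Ge, Fe. auto_derive; auto. ring. Qed.

Lemma P1p_der c e : is_derive (P1p c) e (P2p c e).
Proof. unfold P2p, P1p, Ee, Ge, Fe. auto_derive; auto. ring. Qed.

Lemma sqrtPp_der c e : 0 < Pp c e -> is_derive (fun x => sqrt (Pp c x)) e (D1p c e).
Proof. intros H. unfold D1p. apply is_derive_sqrt. apply Pp_der. exact H. Qed.

Lemma D1p_der c e : 0 < Pp c e -> is_derive (D1p c) e (D2p c e).
Proof.
intros H.
assert (Hs : 0 < sqrt (Pp c e)) by (apply sqrt_lt_R0; exact H).
assert (Hss : sqrt (Pp c e) * sqrt (Pp c e) = Pp c e) by (apply sqrt_sqrt; lra).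
unfold D1p.
eapply is_derive_ext_loc. apply filter_forall. intros t. reflexivity.
replace (D2p c e) with
  ((P2p c e * (2 * sqrt (Pp c e)) - P1p c e * (2 * D1p c e)) / (2 * sqrt (Pp c e)) ^ 2).
- apply (is_derive_div (P1p c) (fun t => 2 * sqrt (Pp c t)) e). apply P1p_der.
  apply (is_derive_scal (fun x => sqrt (Pp c x)) e 2 (D1p c e)). apply sqrtPp_der; auto.
  lra.
- unfold D2p, D1p.
  replace (4 * Pp c e * sqrt (Pp c e)) with (4 * (sqrt (Pp c e) * sqrt (Pp c e)) * sqrt (Pp c e)) by (rewrite Hss; ring).
  set (s := sqrt (Pp c e)) in *. field. lra.
Qed.

Lemma cR_plus {T : UniformSpace} (f g : T -> R) x : continuous f x -> continuous g x -> continuous (fun y => f y + g y) x.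
Proof. intros; apply (continuous_plus f g); auto. Qed.
Lemma cR_minus {T : UniformSpace} (f g : T -> R) x : continuous f x -> continuous g x -> continuous (fun y => f y - g y) x.
Proof. intros; apply (continuous_minus f g); auto. Qed.
Lemma cR_mult {T : UniformSpace} (f g : T -> R) x : continuous f x -> continuous g x -> continuous (fun y => f y * g y) x.
Proof. intros; apply (continuous_mult f g); auto. Qed.
Lemma cR_const {T : UniformSpace} (k : R) (x : T) : continuous (fun _ => k) x.
Proof. apply continuous_const. Qed.
Lemma cR_pow2 {T : UniformSpace} (f : T -> R) x : continuous f x -> continuous (fun y => f y ^ 2) x.
Proof. intros H. apply (continuous_ext (fun y => f y * (f y * 1))). intros; simpl; ring.
  apply cR_mult; auto. apply cR_mult; auto. apply cR_const. Qed.
Lemma cR_sqrt {T : UniformSpace} (f : T -> R) x : continuous f x -> continuous (fun y => sqrt (f y)) x.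
Proof. intros H. apply (continuous_comp f sqrt); auto. apply continuous_sqrt. Qed.
Lemma cR_div {T : UniformSpace} (f g : T -> R) x : continuous f x -> continuous g x -> g x <> 0 ->
  continuous (fun y => f y / g y) x.
Proof. intros Hf Hg H. apply cR_mult; auto. apply (continuous_comp g Rinv); auto.
  apply continuous_Rinv; auto. Qed.

Ltac cR1 := match goal with
  | |- continuous (fun _ => ?k) _ => apply cR_const
  | |- continuous (fun y => _ ^ 2) _ => apply cR_pow2
  | |- continuous (fun y => _ + _) _ => apply cR_plus
  | |- continuous (fun y => _ - _) _ => apply cR_minus
  | |- continuous (fun y => _ * _) _ => apply cR_mult
  end.
Ltac cRauto := repeat cR1.

Lemma cont_Pp {T : UniformSpace} (cf : nat -> T -> R) (ef : T -> R) x :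
  (forall i, continuous (cf i) x) -> continuous ef x ->
  continuous (fun z => Pp (fun i => cf i z) (ef z)) x.
Proof. intros Hc He. unfold Pp, Ee, Ge, Fe. cRauto; auto. Qed.

Lemma cont_P1p {T : UniformSpace} (cf : nat -> T -> R) (ef : T -> R) x :
  (forall i, continuous (cf i) x) -> continuous ef x ->
  continuous (fun z => P1p (fun i => cf i z) (ef z)) x.
Proof. intros Hc He. unfold P1p, Ee, Ge, Fe. cRauto; auto. Qed.

Lemma cont_P2p {T : UniformSpace} (cf : nat -> T -> R) (ef : T -> R) x :
  (forall i, continuous (cf i) x) -> continuous ef x ->
  continuous (fun z => P2p (fun i => cf i z) (ef z)) x.
Proof. intros Hc He. unfold P2p, Ee, Ge, Fe. cRauto; auto. Qed.

Lemma cont_sPp {T : UniformSpace} (cf : nat -> T -> R) (ef : T -> R) x :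
  (forall i, continuous (cf i) x) -> continuous ef x ->
  continuous (fun z => sqrt (Pp (fun i => cf i z) (ef z))) x.
Proof. intros Hc He. apply (cR_sqrt (fun z => Pp (fun i => cf i z) (ef z))). apply cont_Pp; auto. Qed.

Lemma cont_D1p {T : UniformSpace} (cf : nat -> T -> R) (ef : T -> R) x :
  (forall i, continuous (cf i) x) -> continuous ef x -> 0 < Pp (fun i => cf i x) (ef x) ->
  continuous (fun z => D1p (fun i => cf i z) (ef z)) x.
Proof.
intros Hc He Hp. unfold D1p.
apply (cR_div (fun z => P1p (fun i => cf i z) (ef z)) (fun z => 2 * sqrt (Pp (fun i => cf i z) (ef z)))).
apply cont_P1p; auto. apply cR_mult. apply cR_const. apply cont_sPp; auto.
assert (0 < sqrt (Pp (fun i => cf i x) (ef x))) by (apply sqrt_lt_R0; auto). lra.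
Qed.

Lemma cont_D2p {T : UniformSpace} (cf : nat -> T -> R) (ef : T -> R) x :
  (forall i, continuous (cf i) x) -> continuous ef x -> 0 < Pp (fun i => cf i x) (ef x) ->
  continuous (fun z => D2p (fun i => cf i z) (ef z)) x.
Proof.
intros Hc He Hp. unfold D2p.
assert (Hs : 0 < sqrt (Pp (fun i => cf i x) (ef x))) by (apply sqrt_lt_R0; auto).
apply cR_minus.
- apply (cR_div (fun z => P2p (fun i => cf i z) (ef z)) (fun z => 2 * sqrt (Pp (fun i => cf i z) (ef z)))).
  apply cont_P2p; auto. apply cR_mult. apply cR_const. apply cont_sPp; auto. lra.
- apply (cR_div (fun z => P1p (fun i => cf i z) (ef z) ^ 2)
     (fun z => 4 * Pp (fun i => cf i z) (ef z) * sqrt (Pp (fun i => cf i z) (ef z)))).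
  apply cR_pow2. apply cont_P1p; auto.
  apply cR_mult. apply cR_mult. apply cR_const. apply cont_Pp; auto. apply cont_sPp; auto.
  apply Rgt_not_eq. apply Rmult_lt_0_compat; [|auto]. lra.
Qed.

Lemma sumf_ext l f g : (forall j, In j l -> f j = g j) -> sumf l f = sumf l g.
Proof. induction l as [|a l IH]; intros H; simpl; auto.
  unfold sumf in *; simpl. rewrite H by (simpl; auto). f_equal. apply IH. intros j Hj; apply H; simpl; auto. Qed.

Lemma sumf_lin l x y f g : sumf l (fun j => x * f j + y * g j) = x * sumf l f + y * sumf l g.
Proof. induction l as [|a l IH]; unfold sumf in *; simpl. ring. rewrite IH. ring. Qed.

Lemma sumf_plus l f g : sumf l (fun j => f j + g j) = sumf l f + sumf l g.
Proof. induction l as [|a l IH]; unfold sumf in *; simpl. ring. rewrite IH. ring. Qed.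

Lemma sumf_scal l x f : sumf l (fun j => x * f j) = x * sumf l f.
Proof. induction l as [|a l IH]; unfold sumf in *; simpl. ring. rewrite IH. ring. Qed.

Lemma sumf_zero l f : (forall j, In j l -> f j = 0) -> sumf l f = 0.
Proof. induction l as [|a l IH]; intros H; unfold sumf in *; simpl. ring.
  rewrite H by (simpl; auto). rewrite IH. ring. intros; apply H; simpl; auto. Qed.

Lemma sumf_ge0 l f : (forall j, In j l -> 0 <= f j) -> 0 <= sumf l f.
Proof. induction l as [|a l IH]; intros H; unfold sumf in *; simpl. lra.
  apply Rplus_le_le_0_compat. apply H; simpl; auto. apply IH. intros; apply H; simpl; auto. Qed.

Lemma dotn_sumf n a b : dotn n a b = sumf (seq 0 n) (fun j => a j * b j).
Proof. reflexivity. Qed.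

Lemma in_seq0 n j : In j (seq 0 n) -> (j < n)%nat.
Proof. intros H. apply in_seq in H. lia. Qed.

Lemma dotn_ext n a a' b b' : (forall j, (j < n)%nat -> a j = a' j) -> (forall j, (j < n)%nat -> b j = b' j) ->
  dotn n a b = dotn n a' b'.
Proof. intros Ha Hb. rewrite !dotn_sumf. apply sumf_ext. intros j Hj.
  apply in_seq0 in Hj. rewrite Ha, Hb; auto. Qed.

Lemma dotn_comm n a b : dotn n a b = dotn n b a.
Proof. rewrite !dotn_sumf. apply sumf_ext. intros; ring. Qed.

Lemma dotn_linl n x y a b c : dotn n (fun j => x * a j + y * b j) c = x * dotn n a c + y * dotn n b c.
Proof. rewrite !dotn_sumf. rewrite <- sumf_lin. apply sumf_ext. intros; ring. Qed.

Lemma dotn_linr n x y a b c : dotn n c (fun j => x * a j + y * b j) = x * dotn n c a + y * dotn n c b.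
Proof. rewrite !dotn_sumf. rewrite <- sumf_lin. apply sumf_ext. intros; ring. Qed.

Lemma dotn_expand n e A B C D :
  dotn n (fun j => A j + e * B j) (fun j => C j + e * D j) =
  dotn n A C + e * (dotn n A D + dotn n B C) + e ^ 2 * dotn n B D.
Proof. rewrite !dotn_sumf.
  rewrite (sumf_ext _ _ (fun j => 1 * (A j * C j) + e * (A j * D j + B j * C j + e * (B j * D j)))).
  rewrite sumf_lin.
  rewrite (sumf_ext _ (fun j => A j * D j + B j * C j + e * (B j * D j)) (fun j => 1 * (A j * D j + B j * C j) + e * (B j * D j))).
  rewrite sumf_lin, sumf_plus. ring.
  intros; ring. intros; ring. Qed.

Lemma dotn_ge0 n a : 0 <= dotn n a a.
Proof. rewrite dotn_sumf. apply sumf_ge0. intros. nra. Qed.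

Lemma cont_sumf {T : UniformSpace} l (F : T -> nat -> R) x :
  (forall j, In j l -> continuous (fun p => F p j) x) -> continuous (fun p => sumf l (F p)) x.
Proof.
induction l as [|a l IH]; intros H; unfold sumf in *; simpl.
- apply cR_const.
- apply (cR_plus (fun p => F p a) (fun p => fold_right Rplus 0 (map (F p) l))).
  apply H; simpl; auto. apply IH. intros; apply H; simpl; auto.
Qed.

Lemma cont_dotn {T : UniformSpace} n (a b : T -> nat -> R) x :
  (forall j, (j < n)%nat -> continuous (fun p => a p j) x) ->
  (forall j, (j < n)%nat -> continuous (fun p => b p j) x) ->
  continuous (fun p => dotn n (a p) (b p)) x.
Proof.
intros Ha Hb. apply (cont_sumf (seq 0 n) (fun p j => a p j * b p j)).
intros j Hj. apply in_seq0 in Hj. apply (cR_mult (fun p => a p j) (fun p => b p j)); auto.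
Qed.

Lemma is_derive_sumf l (F : R -> nat -> R) (dF : nat -> R) x :
  (forall j, In j l -> is_derive (fun t => F t j) x (dF j)) ->
  is_derive (fun t => sumf l (F t)) x (sumf l dF).
Proof.
induction l as [|a l IH]; intros H; unfold sumf in *; simpl.
- apply (is_derive_const 0 x).
- apply (is_derive_plus (fun t => F t a) (fun t => fold_right Rplus 0 (map (F t) l))).
  apply H; simpl; auto. apply IH. intros; apply H; simpl; auto.
Qed.

Lemma is_derive_dotn n (a b : R -> nat -> R) da db x :
  (forall j, (j < n)%nat -> is_derive (fun t => a t j) x (da j)) ->
  (forall j, (j < n)%nat -> is_derive (fun t => b t j) x (db j)) ->
  is_derive (fun t => dotn n (a t) (b t)) x (dotn n da (b x) + dotn n (a x) db).
Proof.
intros Ha Hb.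
assert (E : dotn n da (b x) + dotn n (a x) db = sumf (seq 0 n) (fun j => da j * b x j + a x j * db j)).
{ rewrite !dotn_sumf. rewrite sumf_plus. reflexivity. }
rewrite E. apply (is_derive_sumf (seq 0 n) (fun t j => a t j * b t j)).
intros j Hj. apply in_seq0 in Hj.
apply (is_derive_mult (fun t => a t j) (fun t => b t j)); auto.
intros; apply Rmult_comm.
Qed.

Lemma CkB_loc k f u v : CkB k f -> inB u v ->
  locally_2d (fun a b => forall l, (length l <= k)%nat ->
     continuous (uncurry2 (pds l f)) (a, b) /\
     ((length l < k)%nat -> ex_derive (fun t => pds l f t b) a /\ ex_derive (fun t => pds l f a t) b)) u v.
Proof.
intros [rho [Hrho Hck]] Huv. unfold inB in Huv.
assert (Hd : 0 < (rho - 1) / 4) by lra.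
exists (mkposreal _ Hd). intros a b Ha Hb l Hl. simpl in Ha, Hb.
apply Hck; auto.
assert (Hu : Rabs u <= 1). { apply Rabs_le. nra. }
assert (Hv : Rabs v <= 1). { apply Rabs_le. nra. }
set (d := (rho - 1) / 4) in *.
assert (a ^ 2 <= u ^ 2 + 2 * Rabs u * d + d ^ 2).
{ assert (Rabs a <= Rabs u + d).
  { replace a with (u + (a - u)) by ring. eapply Rle_trans. apply Rabs_triang. lra. }
  assert (Rabs a ^ 2 <= (Rabs u + d) ^ 2). { apply pow_incr. split; [apply Rabs_pos|auto]. }
  rewrite <- (pow2_abs a). rewrite <- (pow2_abs u). nra. }
assert (b ^ 2 <= v ^ 2 + 2 * Rabs v * d + d ^ 2).
{ assert (Rabs b <= Rabs v + d).
  { replace b with (v + (b - v)) by ring. eapply Rle_trans. apply Rabs_triang. lra. }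
  assert (Rabs b ^ 2 <= (Rabs v + d) ^ 2). { apply pow_incr. split; [apply Rabs_pos|auto]. }
  rewrite <- (pow2_abs b). rewrite <- (pow2_abs v). nra. }
assert (Rabs u * d <= d) by nra.
assert (Rabs v * d <= d) by nra.
unfold d in *. nra.
Qed.

Lemma CkB_pt k f u v : CkB k f -> inB u v -> forall l, (length l <= k)%nat ->
     continuous (uncurry2 (pds l f)) (u, v) /\
     ((length l < k)%nat -> ex_derive (fun t => pds l f t v) u /\ ex_derive (fun t => pds l f u t) v).
Proof. intros H Huv. apply (locally_2d_singleton _ _ _ (CkB_loc k f u v H Huv)). Qed.

Lemma CkB_cont k f l u v : CkB k f -> inB u v -> (length l <= k)%nat -> continuous (uncurry2 (pds l f)) (u, v).
Proof. intros H Huv Hl. apply (CkB_pt k f u v H Huv l Hl). Qed.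

Lemma CkB_dU k f l u v : CkB k f -> inB u v -> (length l < k)%nat -> ex_derive (fun t => pds l f t v) u.
Proof. intros H Huv Hl. apply (CkB_pt k f u v H Huv l); auto. lia. Qed.

Lemma CkB_dV k f l u v : CkB k f -> inB u v -> (length l < k)%nat -> ex_derive (fun t => pds l f u t) v.
Proof. intros H Huv Hl. apply (CkB_pt k f u v H Huv l); auto. lia. Qed.

Lemma schwarz_B k f u v : (2 <= k)%nat -> CkB k f -> inB u v -> pu (pv f) u v = pv (pu f) u v.
Proof.
intros Hk H Huv. unfold pu, pv.
apply Schwarz.
- generalize (CkB_loc k f u v H Huv). apply locally_2d_impl. apply locally_2d_forall.
  intros a b Hab. repeat split.
  + apply (Hab nil); simpl; lia.
  + apply (Hab nil); simpl; lia.
  + apply (Hab (true :: nil)); simpl; lia.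
  + apply (Hab (false :: nil)); simpl; lia.
- apply continuity_2d_pt_filterlim. apply (CkB_cont k f (false :: true :: nil)); auto.
- apply continuity_2d_pt_filterlim. apply (CkB_cont k f (true :: false :: nil)); auto.
Qed.

Definition au (N : R -> R -> nat -> R) (phi : R -> R -> R) u v : nat -> R :=
  fun j => pu phi u v * N u v j + phi u v * Vu N u v j.
Definition av (N : R -> R -> nat -> R) (phi : R -> R -> R) u v : nat -> R :=
  fun j => pv phi u v * N u v j + phi u v * Vv N u v j.

Lemma Vu_vary X N phi e u v j :
  ex_derive (fun t => X t v j) u -> ex_derive (fun t => phi t v) u -> ex_derive (fun t => N t v j) u ->
  Vu (vary X e phi N) u v j = Vu X u v j + e * (pu phi u v * N u v j + phi u v * Vu N u v j).
Proof.
intros H1 H2 H3. unfold Vu, pu, vary.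
apply is_derive_unique.
apply (is_derive_plus (fun t => X t v j) (fun t => e * phi t v * N t v j)).
- apply Derive_correct; auto.
- replace (e * (Derive (fun t => phi t v) u * N u v j + phi u v * Derive (fun t => N t v j) u))
    with ((e * Derive (fun t => phi t v) u) * N u v j + (e * phi u v) * Derive (fun t => N t v j) u) by ring.
  apply (is_derive_mult (fun t => e * phi t v) (fun t => N t v j)).
  + apply (is_derive_scal (fun t => phi t v)). apply Derive_correct; auto.
  + apply Derive_correct; auto.
  + intros; apply Rmult_comm.
Qed.

Lemma Vv_vary X N phi e u v j :
  ex_derive (fun t => X u t j) v -> ex_derive (fun t => phi u t) v -> ex_derive (fun t => N u t j) v ->
  Vv (vary X e phi N) u v j = Vv X u v j + e * (pv phi u v * N u v j + phi u v * Vv N u v j).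
Proof.
intros H1 H2 H3. unfold Vv, pv, vary.
apply is_derive_unique.
apply (is_derive_plus (fun t => X u t j) (fun t => e * phi u t * N u t j)).
- apply Derive_correct; auto.
- replace (e * (Derive (fun t => phi u t) v * N u v j + phi u v * Derive (fun t => N u t j) v))
    with ((e * Derive (fun t => phi u t) v) * N u v j + (e * phi u v) * Derive (fun t => N u t j) v) by ring.
  apply (is_derive_mult (fun t => e * phi u t) (fun t => N u t j)).
  + apply (is_derive_scal (fun t => phi u t)). apply Derive_correct; auto.
  + apply Derive_correct; auto.
  + intros; apply Rmult_comm.
Qed.

Definition coef n X N phi (i : nat) (u v : R) : R :=
  match i with
  | 0%nat => dotn n (Vu X u v) (Vu X u v)
  | 1%nat => dotn n (Vu X u v) (au N phi u v) + dotn n (au N phi u v) (Vu X u v)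
  | 2%nat => dotn n (au N phi u v) (au N phi u v)
  | 3%nat => dotn n (Vv X u v) (Vv X u v)
  | 4%nat => dotn n (Vv X u v) (av N phi u v) + dotn n (av N phi u v) (Vv X u v)
  | 5%nat => dotn n (av N phi u v) (av N phi u v)
  | 6%nat => dotn n (Vu X u v) (Vv X u v)
  | 7%nat => dotn n (Vu X u v) (av N phi u v) + dotn n (au N phi u v) (Vv X u v)
  | 8%nat => dotn n (au N phi u v) (av N phi u v)
  | _ => 0
  end.

Lemma C0_cont phi l u v : C0inf phi -> continuous (uncurry2 (pds l phi)) (u, v).
Proof. intros [H _]. exact (proj1 (H l u v)). Qed.
Lemma C0_dU phi l u v : C0inf phi -> ex_derive (fun t => pds l phi t v) u.
Proof. intros [H _]. exact (proj1 (proj2 (H l u v))). Qed.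
Lemma C0_dV phi l u v : C0inf phi -> ex_derive (fun t => pds l phi u t) v.
Proof. intros [H _]. exact (proj2 (proj2 (H l u v))). Qed.

Lemma area_integrand n X N phi e u v :
  CkBvec 3 n X -> CkBvec 2 n N -> C0inf phi -> inB u v ->
  sqrt (dotn n (Vu (vary X e phi N) u v) (Vu (vary X e phi N) u v) *
        dotn n (Vv (vary X e phi N) u v) (Vv (vary X e phi N) u v) -
        (dotn n (Vu (vary X e phi N) u v) (Vv (vary X e phi N) u v)) ^ 2)
  = sqrt (Pp (fun i => coef n X N phi i u v) e).
Proof.
intros HX HN Hphi Huv.
assert (Hu : forall j, (j < n)%nat -> Vu (vary X e phi N) u v j = Vu X u v j + e * au N phi u v j).
{ intros j Hj. apply Vu_vary.
  apply (CkB_dU 3 (fun a b => X a b j) nil u v (HX j Hj) Huv); simpl; lia.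
  apply (C0_dU phi nil); auto.
  apply (CkB_dU 2 (fun a b => N a b j) nil u v (HN j Hj) Huv); simpl; lia. }
assert (Hv : forall j, (j < n)%nat -> Vv (vary X e phi N) u v j = Vv X u v j + e * av N phi u v j).
{ intros j Hj. apply Vv_vary.
  apply (CkB_dV 3 (fun a b => X a b j) nil u v (HX j Hj) Huv); simpl; lia.
  apply (C0_dV phi nil); auto.
  apply (CkB_dV 2 (fun a b => N a b j) nil u v (HN j Hj) Huv); simpl; lia. }
set (Yu := Vu (vary X e phi N) u v). set (Yv := Vv (vary X e phi N) u v).
rewrite (dotn_ext n Yu (fun j => Vu X u v j + e * au N phi u v j) Yu (fun j => Vu X u v j + e * au N phi u v j) Hu Hu).
rewrite (dotn_ext n Yv (fun j => Vv X u v j + e * av N phi u v j) Yv (fun j => Vv X u v j + e * av N phi u v j) Hv Hv).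
rewrite (dotn_ext n Yu (fun j => Vu X u v j + e * au N phi u v j) Yv (fun j => Vv X u v j + e * av N phi u v j) Hu Hv).
rewrite !dotn_expand. f_equal. unfold Pp, Ee, Ge, Fe, coef. ring.
Qed.


Lemma cXl n X k l (j : nat) u v : CkBvec k n X -> inB u v -> (j < n)%nat -> (length l <= k)%nat ->
  continuous (fun p : R * R => pds l (fun a b => X a b j) (fst p) (snd p)) (u, v).
Proof. intros H Huv Hj Hl. apply (CkB_cont k (fun a b => X a b j) l); auto. Qed.

Lemma cphi phi l u v : C0inf phi -> continuous (fun p : R * R => pds l phi (fst p) (snd p)) (u, v).
Proof. intros H. apply (C0_cont phi l); auto. Qed.

Lemma cont_au n N phi u v (j : nat) : CkBvec 2 n N -> C0inf phi -> inB u v -> (j < n)%nat ->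
  continuous (fun p : R * R => au N phi (fst p) (snd p) j) (u, v).
Proof.
intros HN Hphi Huv Hj. unfold au.
apply cR_plus; apply cR_mult.
- apply (cphi phi (false :: nil)); auto.
- apply (cXl n N 2 nil j u v HN Huv Hj); simpl; lia.
- apply (cphi phi nil); auto.
- apply (cXl n N 2 (false :: nil) j u v HN Huv Hj); simpl; lia.
Qed.

Lemma cont_av n N phi u v (j : nat) : CkBvec 2 n N -> C0inf phi -> inB u v -> (j < n)%nat ->
  continuous (fun p : R * R => av N phi (fst p) (snd p) j) (u, v).
Proof.
intros HN Hphi Huv Hj. unfold av.
apply cR_plus; apply cR_mult.
- apply (cphi phi (true :: nil)); auto.
- apply (cXl n N 2 nil j u v HN Huv Hj); simpl; lia.
- apply (cphi phi nil); auto.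
- apply (cXl n N 2 (true :: nil) j u v HN Huv Hj); simpl; lia.
Qed.

Lemma contB_coef n X N phi i : CkBvec 3 n X -> CkBvec 2 n N -> C0inf phi -> contB (coef n X N phi i).
Proof.
intros HX HN Hphi u v Huv.
assert (A : forall j, (j < n)%nat -> continuous (fun p : R * R => Vu X (fst p) (snd p) j) (u, v)).
{ intros j Hj. apply (cXl n X 3 (false :: nil) j u v HX Huv Hj); simpl; lia. }
assert (B : forall j, (j < n)%nat -> continuous (fun p : R * R => Vv X (fst p) (snd p) j) (u, v)).
{ intros j Hj. apply (cXl n X 3 (true :: nil) j u v HX Huv Hj); simpl; lia. }
assert (C := fun j => cont_au n N phi u v j HN Hphi Huv).
assert (D := fun j => cont_av n N phi u v j HN Hphi Huv).
set (fXu := fun p : R * R => Vu X (fst p) (snd p)).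
set (fXv := fun p : R * R => Vv X (fst p) (snd p)).
set (fau := fun p : R * R => au N phi (fst p) (snd p)).
set (fav := fun p : R * R => av N phi (fst p) (snd p)).
assert (K : forall a b, (forall j, (j < n)%nat -> continuous (fun p => a p j) (u, v)) ->
   (forall j, (j < n)%nat -> continuous (fun p => b p j) (u, v)) ->
   continuous (fun p : R * R => dotn n (a p) (b p)) (u, v)).
{ intros a b Ha Hb. apply cont_dotn; auto. }
unfold uncurry2.
destruct i as [|[|[|[|[|[|[|[|[|i]]]]]]]]]; simpl.
- apply (K fXu fXu A A).
- apply (cR_plus (fun p => dotn n (fXu p) (fau p)) (fun p => dotn n (fau p) (fXu p))).
  apply (K fXu fau A C). apply (K fau fXu C A).
- apply (K fau fau C C).
- apply (K fXv fXv B B).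
- apply (cR_plus (fun p => dotn n (fXv p) (fav p)) (fun p => dotn n (fav p) (fXv p))).
  apply (K fXv fav B D). apply (K fav fXv D B).
- apply (K fav fav D D).
- apply (K fXu fXv A B).
- apply (cR_plus (fun p => dotn n (fXu p) (fav p)) (fun p => dotn n (fau p) (fXv p))).
  apply (K fXu fav A D). apply (K fau fXv C B).
- apply (K fau fav C D).
- apply cR_const.
Qed.
Module Pars.
From mathcomp Require Import all_boot all_algebra.
From mathcomp Require Import Rstruct ring.
Import GRing.Theory.
Local Open Scope ring_scope.

Lemma fold_sum (f : nat -> R) (l : list nat) :
  fold_right Rplus R0 (List.map f l) = (\sum_(i <- l) f i)%R.
Proof.
elim: l => [|a l IH] /=; first by rewrite big_nil.
by rewrite big_cons IH.
Qed.

Lemma seq_iota m n : List.seq m n = iota m n.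
Proof. by elim: n m => [|n IH] m //=; rewrite IH. Qed.

Lemma fold_sum_ord (f : nat -> R) n :
  fold_right Rplus R0 (List.map f (List.seq 0 n)) = (\sum_(i < n) f i)%R.
Proof.
by rewrite fold_sum seq_iota -(big_mkord xpredT f) /index_iota subn0.
Qed.

Lemma dotn_sum n a b : dotn n a b = (\sum_(i < n) a i * b i)%R.
Proof. by rewrite /dotn fold_sum_ord. Qed.

Lemma parseval n (e : nat -> nat -> R) (x : nat -> R) :
  (forall i j, Peano.lt i n -> Peano.lt j n ->
     dotn n (e i) (e j) = if Nat.eqb i j then R1 else R0) ->
  dotn n x x = fold_right Rplus R0 (List.map (fun i => pow (dotn n x (e i)) 2) (List.seq 0 n)).
Proof.
move=> He.
pose M : 'M[R]_n := \matrix_(i < n, j < n) e i j.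
have HM : (M *m M^T)%R = 1%:M%R.
  apply/matrixP => i j; rewrite !mxE.
  have := He i j (ltP (ltn_ord i)) (ltP (ltn_ord j)).
  rewrite dotn_sum => H.
  transitivity (if Nat.eqb i j then R1 else R0); last first.
    case: (Nat.eqb_spec i j) => [/val_inj ->|Hne]; first by rewrite eqxx.
    by case: eqP => // Hij; case: Hne; rewrite Hij.
  rewrite -H; apply: eq_bigr => k _; by rewrite !mxE.
have HM2 := mulmx1C HM.
rewrite fold_sum_ord dotn_sum.
transitivity (\sum_(k < n) \sum_(l < n) x k * x l * (M^T *m M)%R k l)%R.
  apply: eq_bigr => k _.
  rewrite HM2 (bigD1 k) //= big1; last first.
    by move=> l /negbTE Hl; rewrite mxE eq_sym Hl mulr0.
  by rewrite mxE eqxx /= mulr1 addr0.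
transitivity (\sum_(i < n) (\sum_(k < n) x k * e i k) * (\sum_(l < n) x l * e i l))%R; last first.
  apply: eq_bigr => i _; rewrite dotn_sum /=.
  rewrite /pow Rmult_1_r; reflexivity.
rewrite exchange_big /=.
transitivity (\sum_(k < n) \sum_(i < n) \sum_(l < n) (x k * e i k) * (x l * e i l))%R.
  apply: eq_bigr => k _.
  rewrite exchange_big /=.
  apply: eq_bigr => l _.
  rewrite !mxE big_distrr /=.
  apply: eq_bigr => i _; rewrite !mxE.
  ring.
rewrite exchange_big /=; apply: eq_bigr => i _.
rewrite big_distrl /=.
apply: eq_bigr => k _.
by rewrite big_distrr.
Qed.
End Pars.

Lemma sB_cl u : sB (cl u) = sB u.
Proof.
destruct (Rle_dec (Rabs u) 1) as [H|H].
- rewrite cl_id; auto. apply Rabs_le_between; auto.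
- rewrite (sB_out u) by lra. apply sB_out.
  assert (Hc : cl u = 1 \/ cl u = -1).
  { unfold cl, Rmax, Rmin.
    destruct (Rle_dec 0 u). { rewrite Rabs_pos_eq in H by lra.
      destruct (Rle_dec 1 u); [|lra]. destruct (Rle_dec (-1) 1); [left; reflexivity|lra]. }
    rewrite Rabs_left in H by lra.
    destruct (Rle_dec 1 u); [lra|]. destruct (Rle_dec (-1) u); [lra|right; reflexivity]. }
  destruct Hc as [Hc|Hc]; rewrite Hc. rewrite Rabs_R1; lra. unfold Rabs; destruct Rcase_abs; lra.
Qed.

Lemma cl_cl u : cl (cl u) = cl u.
Proof. apply cl_id. apply cl_bound. Qed.

Lemma cont_kappa (g : R -> R -> R) e u w : contB g ->
  continuous (fun z : (R * R) * R => g (cl (snd (fst z))) (sB (snd (fst z)) * cl (snd z))) ((e, u), w).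
Proof.
intros Hg.
apply (continuous_comp (fun z : (R * R) * R => (cl (snd (fst z)), sB (snd (fst z)) * cl (snd z))) (uncurry2 g) ((e, u), w)).
- apply continuous_pair.
  + apply (continuous_comp (fun z : (R * R) * R => snd (fst z)) cl).
    apply (continuous_comp fst snd). apply continuous_fst. apply continuous_snd. apply continuous_cl.
  + apply cR_mult.
    * apply (continuous_comp (fun z : (R * R) * R => snd (fst z)) sB).
      apply (continuous_comp fst snd). apply continuous_fst. apply continuous_snd. apply continuous_sB.
    * apply (continuous_comp snd cl). apply continuous_snd. apply continuous_cl.
- apply Hg. apply inB_TB.
Qed.

Lemma cont_e (e u w : R) : continuous (fun z : (R * R) * R => fst (fst z)) ((e, u), w).
Proof. apply (continuous_comp fst fst). apply continuous_fst. apply continuous_fst. Qed.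

Lemma cont_su (e u w : R) : continuous (fun z : (R * R) * R => sB (snd (fst z))) ((e, u), w).
Proof. apply (continuous_comp (fun z : (R * R) * R => snd (fst z)) sB).
  apply (continuous_comp fst snd). apply continuous_fst. apply continuous_snd. apply continuous_sB. Qed.

Lemma cont2_of_contB (c : nat -> R -> R -> R) u v :
  (forall i, contB (c i)) -> inB u v -> forall i, continuous (fun p : R * R => c i (fst p) (snd p)) (u, v).
Proof. intros H Huv i. apply H; auto. Qed.

Lemma second_var n X N phi :
  CkBvec 3 n X -> CkBvec 2 n N -> C0inf phi ->
  (forall u v, inB u v -> 0 < Wf n X u v /\ dotn n (Vv X u v) (Vv X u v) = Wf n X u v /\
                          dotn n (Vu X u v) (Vv X u v) = 0) ->
  Derive_n (fun e => Area n (vary X e phi N)) 2 0 =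
  IntB (fun u v => D2p (fun i => coef n X N phi i u v) 0).
Proof.
intros HX HN Hphi Hconf.
set (c := coef n X N phi).
assert (Hc : forall i, contB (c i)) by (intros; apply contB_coef; auto).
assert (H0 : forall u v, inB u v -> 0 < Pp (fun i => c i u v) 0).
{ intros u v Huv. destruct (Hconf u v Huv) as [W1 [W2 W3]].
  unfold Pp, Ee, Ge, Fe. unfold c, coef. unfold Wf in *. rewrite W2, W3. nra. }
set (cf := fun (i : nat) (z : (R * R) * R) => c i (cl (snd (fst z))) (sB (snd (fst z)) * cl (snd z))).
set (ef := fun z : (R * R) * R => fst (fst z)).
assert (Hcf : forall i e u w, continuous (cf i) ((e, u), w)).
{ intros i e u w. apply cont_kappa. apply Hc. }
set (F := fun e u w => Pp (fun i => c i (cl u) (sB u * cl w)) e).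
destruct (unif_pos F) as [d Hd].
{ intros u w Hu Hw. split.
  - apply (cont_Pp cf ef). intros i; apply Hcf. apply cont_e.
  - apply H0. apply inB_TB. }
assert (Hpos : forall e u w, Rabs e < d -> 0 < F e u w).
{ intros e u w He. assert (E : F e u w = F e (cl u) (cl w)).
  { unfold F. rewrite cl_cl, cl_cl, sB_cl. reflexivity. }
  rewrite E. apply Hd; auto; apply cl_bound. }
set (G := fun e u w => sB u * sqrt (F e u w)).
set (G1 := fun e u w => sB u * D1p (fun i => c i (cl u) (sB u * cl w)) e).
set (G2 := fun e u w => sB u * D2p (fun i => c i (cl u) (sB u * cl w)) e).
assert (HG : forall e u w, cont3 G e u w).
{ intros e u w. unfold cont3, G, F.
  apply (cR_mult (fun z : (R * R) * R => sB (snd (fst z)))). apply cont_su.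
  apply (cont_sPp cf ef). intros i; apply Hcf. apply cont_e. }
assert (HG1 : forall e u w, Rabs e < d -> cont3 G1 e u w).
{ intros e u w He. unfold cont3, G1.
  apply (cR_mult (fun z : (R * R) * R => sB (snd (fst z)))). apply cont_su.
  apply (cont_D1p cf ef). intros i; apply Hcf. apply cont_e. apply Hpos; auto. }
assert (HG2 : forall e u w, Rabs e < d -> cont3 G2 e u w).
{ intros e u w He. unfold cont3, G2.
  apply (cR_mult (fun z : (R * R) * R => sB (snd (fst z)))). apply cont_su.
  apply (cont_D2p cf ef). intros i; apply Hcf. apply cont_e. apply Hpos; auto. }
assert (HD1 : forall e u w, Rabs e < d -> is_derive (fun x => G x u w) e (G1 e u w)).
{ intros e u w He. unfold G, G1.
  apply (is_derive_scal (fun x => sqrt (F x u w))). apply sqrtPp_der. apply Hpos; auto. }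
assert (HD2 : forall e u w, Rabs e < d -> is_derive (fun x => G1 x u w) e (G2 e u w)).
{ intros e u w He. unfold G1, G2.
  apply (is_derive_scal (fun x => D1p (fun i => c i (cl u) (sB u * cl w)) x)). apply D1p_der. apply Hpos; auto. }
assert (HA : forall e, Area n (vary X e phi N) = SQ (G e)).
{ intros e. unfold Area.
  rewrite (IntB_ext _ (fun u v => sqrt (Pp (fun i => c i u v) e))).
  2: { intros u v Huv. apply area_integrand; auto. }
  rewrite IntB_SQ. reflexivity.
  intros u v Huv. apply (cont_sPp (fun i (p : R * R) => c i (fst p) (snd p)) (fun _ => e)).
  intros i; apply Hc; auto. apply cR_const. }
assert (Hd0 : Rabs 0 < d) by (rewrite Rabs_R0; apply cond_pos).
simpl.
transitivity (SQ (G2 0)).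
{ rewrite (Derive_ext_loc _ (fun e => SQ (G1 e))).
2: { generalize (locally_abs_lt d 0 Hd0). apply filter_imp. intros e He.
     rewrite (Derive_ext _ (fun e => SQ (G e))) by apply HA.
     apply is_derive_unique. apply (SQ_derive G G1 d e He HD1 (fun e u w _ => HG e u w) HG1). }
  apply is_derive_unique. exact (SQ_derive G1 G2 d 0 Hd0 HD2 HG1 HG2). }
rewrite IntB_SQ. reflexivity.
intros u v Huv. apply (cont_D2p (fun i (p : R * R) => c i (fst p) (snd p)) (fun _ => 0)).
intros i; apply Hc; auto. apply cR_const. apply H0; auto.
Qed.

Lemma loc_inB_u u v : u ^ 2 + v ^ 2 < 1 -> locally u (fun t => inB t v).
Proof.
intros H.
assert (Hd : 0 < Rmin 1 ((1 - u ^ 2 - v ^ 2) / 4)) by (apply Rmin_glb_lt; lra).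
exists (mkposreal _ Hd). intros t Ht. change (Rabs (t - u) < Rmin 1 ((1 - u ^ 2 - v ^ 2) / 4)) in Ht.
assert (H1 := Rmin_l 1 ((1 - u ^ 2 - v ^ 2) / 4)). assert (H2 := Rmin_r 1 ((1 - u ^ 2 - v ^ 2) / 4)).
set (d := Rmin 1 ((1 - u ^ 2 - v ^ 2) / 4)) in *.
unfold inB. assert (Hu : Rabs u <= 1). { apply Rabs_le. nra. }
assert (Rabs t <= Rabs u + d).
{ replace t with (u + (t - u)) by ring. eapply Rle_trans. apply Rabs_triang. lra. }
assert (Rabs t ^ 2 <= (Rabs u + d) ^ 2). { apply pow_incr. split; [apply Rabs_pos|auto]. }
assert (Hd0 : 0 < d) by exact Hd.
assert (E1 : (Rabs u + d) ^ 2 = Rabs u ^ 2 + 2 * Rabs u * d + d * d) by ring.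
assert (E2 : Rabs u * d <= 1 * d) by (apply Rmult_le_compat_r; lra).
assert (E3 : d * d <= 1 * d) by (apply Rmult_le_compat_r; lra).
assert (Ea := pow2_abs u). assert (Eb := pow2_abs t). lra.
Qed.

Lemma loc_inB_v u v : u ^ 2 + v ^ 2 < 1 -> locally v (fun t => inB u t).
Proof.
intros H. assert (H' : v ^ 2 + u ^ 2 < 1) by lra.
generalize (loc_inB_u v u H'). apply filter_imp. unfold inB. intros; lra.
Qed.

Lemma deriv_const_u (f : R -> R -> R) k u v l : (forall a b, inB a b -> f a b = k) ->
  u ^ 2 + v ^ 2 < 1 -> is_derive (fun t => f t v) u l -> l = 0.
Proof.
intros Hf Huv Hd. apply is_derive_unique in Hd. rewrite <- Hd.
rewrite (Derive_ext_loc _ (fun _ => k)). apply Derive_const.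
generalize (loc_inB_u u v Huv). apply filter_imp. intros t Ht. apply Hf; auto.
Qed.

Lemma deriv_const_v (f : R -> R -> R) k u v l : (forall a b, inB a b -> f a b = k) ->
  u ^ 2 + v ^ 2 < 1 -> is_derive (fun t => f u t) v l -> l = 0.
Proof.
intros Hf Huv Hd. apply is_derive_unique in Hd. rewrite <- Hd.
rewrite (Derive_ext_loc _ (fun _ => k)). apply Derive_const.
generalize (loc_inB_v u v Huv). apply filter_imp. intros t Ht. apply Hf; auto.
Qed.

Lemma dd_u n (A B : R -> R -> nat -> R) (dA dB : nat -> R) k u v :
  (forall a b, inB a b -> dotn n (A a b) (B a b) = k) -> u ^ 2 + v ^ 2 < 1 ->
  (forall j, (j < n)%nat -> is_derive (fun t => A t v j) u (dA j)) ->
  (forall j, (j < n)%nat -> is_derive (fun t => B t v j) u (dB j)) ->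
  dotn n dA (B u v) + dotn n (A u v) dB = 0.
Proof.
intros H Huv HA HB.
apply (deriv_const_u (fun a b => dotn n (A a b) (B a b)) k u v); auto.
apply (is_derive_dotn n (fun t => A t v) (fun t => B t v)); auto.
Qed.

Lemma dd_v n (A B : R -> R -> nat -> R) (dA dB : nat -> R) k u v :
  (forall a b, inB a b -> dotn n (A a b) (B a b) = k) -> u ^ 2 + v ^ 2 < 1 ->
  (forall j, (j < n)%nat -> is_derive (fun t => A u t j) v (dA j)) ->
  (forall j, (j < n)%nat -> is_derive (fun t => B u t j) v (dB j)) ->
  dotn n dA (B u v) + dotn n (A u v) dB = 0.
Proof.
intros H Huv HA HB.
apply (deriv_const_v (fun a b => dotn n (A a b) (B a b)) k u v); auto.
apply (is_derive_dotn n (fun t => A u t) (fun t => B u t)); auto.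
Qed.

Lemma phi_out phi u v : C0inf phi -> inB u v -> 1 <= u ^ 2 + v ^ 2 ->
  phi u v = 0 /\ pu phi u v = 0 /\ pv phi u v = 0.
Proof.
intros [_ [r [Hr Hz]]] Huv H1. unfold inB in Huv.
assert (Hu : Rabs u <= 1). { apply Rabs_le. nra. }
assert (Hv : Rabs v <= 1). { apply Rabs_le. nra. }
assert (Hd : 0 < (1 - r ^ 2) / 8) by nra.
set (d := (1 - r ^ 2) / 8) in *.
split; [|split].
- apply Hz. nra.
- unfold pu. rewrite (Derive_ext_loc _ (fun _ => 0)). apply Derive_const.
  exists (mkposreal _ Hd). intros t Ht. change (Rabs (t - u) < d) in Ht.
  apply Hz.
  assert (Rabs (t - u) * Rabs (t - u) <= d * d) by (apply Rmult_le_compat; auto using Rabs_pos; lra).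
  assert (E : t ^ 2 = u ^ 2 + 2 * u * (t - u) + (t - u) ^ 2) by ring.
  assert (u * (t - u) >= - d).
  { assert (Rabs (u * (t - u)) <= d). { rewrite Rabs_mult. assert (0 <= Rabs (t - u)) by apply Rabs_pos. nra. }
    apply Rabs_le_between in H0. lra. }
  assert (0 <= (t - u) ^ 2) by apply pow2_ge_0. unfold d in *. lra.
- unfold pv. rewrite (Derive_ext_loc _ (fun _ => 0)). apply Derive_const.
  exists (mkposreal _ Hd). intros t Ht. change (Rabs (t - v) < d) in Ht.
  apply Hz.
  assert (v * (t - v) >= - d).
  { assert (Rabs (v * (t - v)) <= d). { rewrite Rabs_mult. assert (0 <= Rabs (t - v)) by apply Rabs_pos. nra. }
    apply Rabs_le_between in H. lra. }
  assert (E : t ^ 2 = v ^ 2 + 2 * v * (t - v) + (t - v) ^ 2) by ring.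
  assert (0 <= (t - v) ^ 2) by apply pow2_ge_0. unfold d in *. lra.
Qed.

Lemma dotn_scall n k a b : dotn n (fun j => k * a j) b = k * dotn n a b.
Proof. rewrite !dotn_sumf. rewrite <- sumf_scal. apply sumf_ext. intros; ring. Qed.
Lemma dotn_scalr n k a b : dotn n a (fun j => k * b j) = k * dotn n a b.
Proof. rewrite !dotn_sumf. rewrite <- sumf_scal. apply sumf_ext. intros; ring. Qed.

Lemma sumf_shift a m f : sumf (seq (S a) m) f = sumf (seq a m) (fun i => f (S i)).
Proof. revert a. induction m as [|m IH]; intros a; unfold sumf in *; simpl; auto. rewrite IH. reflexivity. Qed.

Lemma frame_norm n (A B x : nat -> R) (M : nat -> nat -> R) w :
  (3 <= n)%nat -> 0 < w -> dotn n A A = w -> dotn n B B = w -> dotn n A B = 0 ->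
  (forall k, (k < n - 2)%nat -> dotn n A (M k) = 0 /\ dotn n B (M k) = 0) ->
  (forall k l, (k < n - 2)%nat -> (l < n - 2)%nat -> dotn n (M k) (M l) = if Nat.eqb k l then 1 else 0) ->
  dotn n x x = (dotn n x A) ^ 2 / w + (dotn n x B) ^ 2 / w + sumf (seq 0 (n - 2)) (fun k => (dotn n x (M k)) ^ 2).
Proof.
intros Hn Hw HA HB HAB HM HMM.
assert (Hs : 0 < sqrt w) by (apply sqrt_lt_R0; auto).
assert (Hss : sqrt w * sqrt w = w) by (apply sqrt_sqrt; lra).
set (s := sqrt w) in *.
set (e := fun i => match i with
   | O => fun j => / s * A j
   | S O => fun j => / s * B j
   | S (S k) => M k end).
assert (He : forall i j, (i < n)%nat -> (j < n)%nat -> dotn n (e i) (e j) = if Nat.eqb i j then R1 else R0).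
{ intros i j Hi Hj.
  assert (Hi' : forall k, i = S (S k) -> (k < n - 2)%nat) by (intros; lia).
  assert (Hj' : forall k, j = S (S k) -> (k < n - 2)%nat) by (intros; lia).
  destruct i as [|[|i]]; destruct j as [|[|j]]; simpl e; simpl Nat.eqb;
    rewrite ?dotn_scall, ?dotn_scalr.
  - rewrite HA. rewrite <- Hss. field. lra.
  - rewrite HAB. ring.
  - rewrite (proj1 (HM j (Hj' j eq_refl))). ring.
  - rewrite dotn_comm, HAB. ring.
  - rewrite HB. rewrite <- Hss. field. lra.
  - rewrite (proj2 (HM j (Hj' j eq_refl))). ring.
  - rewrite dotn_comm, (proj1 (HM i (Hi' i eq_refl))). ring.
  - rewrite dotn_comm, (proj2 (HM i (Hi' i eq_refl))). ring.
  - apply HMM; auto. }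
rewrite (Pars.parseval n e x He).
assert (Eseq : seq 0 n = 0%nat :: 1%nat :: seq 2 (n - 2)).
{ destruct n as [|[|m]]; [lia|lia|]. simpl. rewrite Nat.sub_0_r. reflexivity. }
rewrite Eseq.
change (fold_right Rplus R0 (map (fun i => dotn n x (e i) ^ 2) (0%nat :: 1%nat :: seq 2 (n - 2))))
  with (dotn n x (e 0%nat) ^ 2 + (dotn n x (e 1%nat) ^ 2 + sumf (seq 2 (n - 2)) (fun i => dotn n x (e i) ^ 2))).
rewrite !sumf_shift. simpl e.
rewrite !dotn_scalr.
replace ((/ s * dotn n x A) ^ 2) with (dotn n x A ^ 2 / w) by (rewrite <- Hss; field; lra).
replace ((/ s * dotn n x B) ^ 2) with (dotn n x B ^ 2 / w) by (rewrite <- Hss; field; lra).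
ring.
Qed.

Lemma D2_alg (c : nat -> R) w : 0 < w -> c 0%nat = w -> c 3%nat = w -> c 6%nat = 0 -> c 1%nat + c 4%nat = 0 ->
  D2p c 0 = c 2%nat + c 5%nat + (c 1%nat * c 4%nat - c 7%nat ^ 2) / w.
Proof.
intros Hw H0 H3 H6 H14.
unfold D2p, P2p, P1p, Pp, Ee, Ge, Fe. rewrite H0, H3, H6.
replace ((w + c 1%nat * 0 + c 2%nat * 0 ^ 2) * (w + c 4%nat * 0 + c 5%nat * 0 ^ 2) -
   (0 + c 7%nat * 0 + c 8%nat * 0 ^ 2) ^ 2) with (w * w) by ring.
rewrite sqrt_square by lra.
replace ((c 1%nat + 2 * c 2%nat * 0) * (w + c 4%nat * 0 + c 5%nat * 0 ^ 2) +
    (w + c 1%nat * 0 + c 2%nat * 0 ^ 2) * (c 4%nat + 2 * c 5%nat * 0) -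
    2 * (0 + c 7%nat * 0 + c 8%nat * 0 ^ 2) * (c 7%nat + 2 * c 8%nat * 0)) with (w * (c 1%nat + c 4%nat)) by ring.
rewrite H14. field. lra.
Qed.

Lemma D2_geom n X Nf phi s u v :
  (3 <= n)%nat -> CkBvec 3 n X ->
  (forall u v, inB u v -> 0 < Wf n X u v /\ dotn n (Vv X u v) (Vv X u v) = Wf n X u v /\
     dotn n (Vu X u v) (Vv X u v) = 0) ->
  (forall s, (s < n - 2)%nat -> CkBvec 2 n (Nf s)) ->
  (forall s, (s < n - 2)%nat -> forall u v, inB u v ->
     dotn n (Vu X u v) (Nf s u v) = 0 /\ dotn n (Vv X u v) (Nf s u v) = 0) ->
  (forall s w, (s < n - 2)%nat -> (w < n - 2)%nat -> forall u v, inB u v ->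
     dotn n (Nf s u v) (Nf w u v) = if Nat.eqb s w then 1 else 0) ->
  (forall s w, (s < n - 2)%nat -> (w < n - 2)%nat -> s <> w -> forall u v, inB u v ->
     dotn n (Vu (Nf s) u v) (Nf w u v) = 0 /\ dotn n (Vv (Nf s) u v) (Nf w u v) = 0) ->
  (forall s, (s < n - 2)%nat -> forall u v, inB u v ->
     L11 n X Nf s u v + L22 n X Nf s u v = 0) ->
  C0inf phi -> (s < n - 2)%nat -> inB u v ->
  D2p (fun i => coef n X (Nf s) phi i u v) 0 =
   (pu phi u v) ^ 2 + (pv phi u v) ^ 2
   - 2 * (phi u v) ^ 2 * ((L11 n X Nf s u v) ^ 2 + (L12 n X Nf s u v) ^ 2) / Wf n X u v.
Proof.
intros Hn HX Hconf HN Hnor Horth Htor Hmin Hphi Hs Huv.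
set (N := Nf s).
destruct (Hconf u v Huv) as [HW [HvW Huv0]].
set (W := Wf n X u v) in *.
assert (HuW : dotn n (Vu X u v) (Vu X u v) = W) by reflexivity.
destruct (Hnor s Hs u v Huv) as [HuN HvN].
assert (HNN : dotn n (N u v) (N u v) = 1).
{ unfold N. rewrite (Horth s s Hs Hs u v Huv). rewrite Nat.eqb_refl. reflexivity. }
set (Xu := Vu X u v). set (Xv := Vv X u v). set (Nu := Vu N u v). set (Nv := Vv N u v). set (N0 := N u v).
set (a := pu phi u v). set (b := pv phi u v). set (f := phi u v).
assert (Ec1 : coef n X N phi 1 u v = 2 * f * dotn n Xu Nu).
{ unfold coef, au. fold Xu. fold a f Nu N0.
  rewrite dotn_linr, dotn_linl. rewrite (dotn_comm n N0 Xu), (dotn_comm n Nu Xu).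
  unfold N0, Xu, N; rewrite HuN. ring. }
assert (Ec4 : coef n X N phi 4 u v = 2 * f * dotn n Xv Nv).
{ unfold coef, av. fold Xv. fold b f Nv N0.
  rewrite dotn_linr, dotn_linl. rewrite (dotn_comm n N0 Xv), (dotn_comm n Nv Xv).
  unfold N0, Xv, N; rewrite HvN. ring. }
assert (Ec7 : coef n X N phi 7 u v = f * (dotn n Xu Nv + dotn n Xv Nu)).
{ unfold coef, au, av. fold Xu Xv. fold a b f Nu Nv N0.
  rewrite dotn_linr, dotn_linl. rewrite (dotn_comm n N0 Xv), (dotn_comm n Nu Xv).
  unfold N0, Xv, Xu, N; rewrite HvN, HuN. ring. }
assert (Ec2 : coef n X N phi 2 u v = a ^ 2 + 2 * a * f * dotn n N0 Nu + f ^ 2 * dotn n Nu Nu).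
{ unfold coef, au. fold a f Nu N0.
  rewrite dotn_linl, !dotn_linr. rewrite (dotn_comm n Nu N0).
  unfold N0 at 1 2; rewrite HNN. ring. }
assert (Ec5 : coef n X N phi 5 u v = b ^ 2 + 2 * b * f * dotn n N0 Nv + f ^ 2 * dotn n Nv Nv).
{ unfold coef, av. fold b f Nv N0.
  rewrite dotn_linl, !dotn_linr. rewrite (dotn_comm n Nv N0).
  unfold N0 at 1 2; rewrite HNN. ring. }
set (L1 := L11 n X Nf s u v). set (L2 := L12 n X Nf s u v). set (L3 := L22 n X Nf s u v).
assert (HL : L1 + L3 = 0) by (apply Hmin; auto).
destruct (Rlt_or_le (u ^ 2 + v ^ 2) 1) as [Hint|Hbd].
2: { destruct (phi_out phi u v Hphi Huv Hbd) as [Hf [Ha Hb]]. fold f a b in Hf, Ha, Hb.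
     rewrite (D2_alg _ W HW); [| reflexivity | exact HvW | exact Huv0 | rewrite Ec1, Ec4, Hf; ring].
     rewrite Ec2, Ec5, Ec1, Ec4, Ec7, Hf, Ha, Hb. field. lra. }
assert (I1 : dotn n (Vuu X u v) N0 + dotn n Xu Nu = 0).
{ apply (dd_u n (fun a b => Vu X a b) N (Vuu X u v) (Vu N u v) 0 u v).
  - intros a0 b0 H. apply (Hnor s Hs a0 b0 H).
  - exact Hint.
  - intros j Hj. apply Derive_correct. apply (CkB_dU 3 (fun a b => X a b j) (false :: nil) u v (HX j Hj) Huv). simpl; lia.
  - intros j Hj. apply Derive_correct. apply (CkB_dU 2 (fun a b => N a b j) nil u v (HN s Hs j Hj) Huv). simpl; lia. }
assert (I2 : dotn n (Vuv X u v) N0 + dotn n Xu Nv = 0).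
{ apply (dd_v n (fun a b => Vu X a b) N (Vuv X u v) (Vv N u v) 0 u v).
  - intros a0 b0 H. apply (Hnor s Hs a0 b0 H).
  - exact Hint.
  - intros j Hj. apply Derive_correct. apply (CkB_dV 3 (fun a b => X a b j) (false :: nil) u v (HX j Hj) Huv). simpl; lia.
  - intros j Hj. apply Derive_correct. apply (CkB_dV 2 (fun a b => N a b j) nil u v (HN s Hs j Hj) Huv). simpl; lia. }
assert (I3 : dotn n (Vuv X u v) N0 + dotn n Xv Nu = 0).
{ apply (dd_u n (fun a b => Vv X a b) N (Vuv X u v) (Vu N u v) 0 u v).
  - intros a0 b0 H. apply (Hnor s Hs a0 b0 H).
  - exact Hint.
  - intros j Hj. unfold Vuv.
    rewrite <- (schwarz_B 3 (fun a b => X a b j) u v) by (auto; lia).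
    apply Derive_correct. apply (CkB_dU 3 (fun a b => X a b j) (true :: nil) u v (HX j Hj) Huv). simpl; lia.
  - intros j Hj. apply Derive_correct. apply (CkB_dU 2 (fun a b => N a b j) nil u v (HN s Hs j Hj) Huv). simpl; lia. }
assert (I4 : dotn n (Vvv X u v) N0 + dotn n Xv Nv = 0).
{ apply (dd_v n (fun a b => Vv X a b) N (Vvv X u v) (Vv N u v) 0 u v).
  - intros a0 b0 H. apply (Hnor s Hs a0 b0 H).
  - exact Hint.
  - intros j Hj. apply Derive_correct. apply (CkB_dV 3 (fun a b => X a b j) (true :: nil) u v (HX j Hj) Huv). simpl; lia.
  - intros j Hj. apply Derive_correct. apply (CkB_dV 2 (fun a b => N a b j) nil u v (HN s Hs j Hj) Huv). simpl; lia. }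
assert (I5 : dotn n Nu N0 + dotn n N0 Nu = 0).
{ apply (dd_u n N N (Vu N u v) (Vu N u v) 1 u v).
  - intros a0 b0 H. unfold N. rewrite (Horth s s Hs Hs a0 b0 H), Nat.eqb_refl. reflexivity.
  - exact Hint.
  - intros j Hj. apply Derive_correct. apply (CkB_dU 2 (fun a b => N a b j) nil u v (HN s Hs j Hj) Huv). simpl; lia.
  - intros j Hj. apply Derive_correct. apply (CkB_dU 2 (fun a b => N a b j) nil u v (HN s Hs j Hj) Huv). simpl; lia. }
assert (I6 : dotn n Nv N0 + dotn n N0 Nv = 0).
{ apply (dd_v n N N (Vv N u v) (Vv N u v) 1 u v).
  - intros a0 b0 H. unfold N. rewrite (Horth s s Hs Hs a0 b0 H), Nat.eqb_refl. reflexivity.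
  - exact Hint.
  - intros j Hj. apply Derive_correct. apply (CkB_dV 2 (fun a b => N a b j) nil u v (HN s Hs j Hj) Huv). simpl; lia.
  - intros j Hj. apply Derive_correct. apply (CkB_dV 2 (fun a b => N a b j) nil u v (HN s Hs j Hj) Huv). simpl; lia. }
assert (Q1 : dotn n N0 Nu = 0) by (rewrite (dotn_comm n Nu N0) in I5; lra).
assert (Q2 : dotn n N0 Nv = 0) by (rewrite (dotn_comm n Nv N0) in I6; lra).
assert (HM : forall k, (k < n - 2)%nat -> dotn n Xu (Nf k u v) = 0 /\ dotn n Xv (Nf k u v) = 0).
{ intros k Hk. apply (Hnor k Hk u v Huv). }
assert (HMM : forall k l, (k < n - 2)%nat -> (l < n - 2)%nat -> dotn n (Nf k u v) (Nf l u v) = if Nat.eqb k l then 1 else 0).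
{ intros k l Hk Hl. apply Horth; auto. }
assert (M1 : dotn n Nu Nu = (dotn n Nu Xu) ^ 2 / W + (dotn n Nu Xv) ^ 2 / W).
{ rewrite (frame_norm n Xu Xv Nu (fun k => Nf k u v) W Hn HW HuW HvW Huv0 HM HMM).
  rewrite (sumf_zero _ (fun k => dotn n Nu (Nf k u v) ^ 2)). ring.
  intros k Hk. apply in_seq0 in Hk. destruct (Nat.eq_dec k s) as [->|Hne].
  - fold N N0. rewrite dotn_comm, Q1. ring.
  - unfold Nu, N. rewrite (proj1 (Htor s k Hs Hk (not_eq_sym Hne) u v Huv)). ring. }
assert (M2 : dotn n Nv Nv = (dotn n Nv Xu) ^ 2 / W + (dotn n Nv Xv) ^ 2 / W).
{ rewrite (frame_norm n Xu Xv Nv (fun k => Nf k u v) W Hn HW HuW HvW Huv0 HM HMM).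
  rewrite (sumf_zero _ (fun k => dotn n Nv (Nf k u v) ^ 2)). ring.
  intros k Hk. apply in_seq0 in Hk. destruct (Nat.eq_dec k s) as [->|Hne].
  - fold N N0. rewrite dotn_comm, Q2. ring.
  - unfold Nv, N. rewrite (proj2 (Htor s k Hs Hk (not_eq_sym Hne) u v Huv)). ring. }
assert (EL1 : dotn n (Vuu X u v) N0 = L1) by reflexivity.
assert (EL2 : dotn n (Vuv X u v) N0 = L2) by reflexivity.
assert (EL3 : dotn n (Vvv X u v) N0 = L3) by reflexivity.
rewrite EL1 in I1. rewrite EL2 in I2, I3. rewrite EL3 in I4.
rewrite (dotn_comm n Nu Xu), (dotn_comm n Nu Xv) in M1.
rewrite (dotn_comm n Nv Xu), (dotn_comm n Nv Xv) in M2.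
assert (P1 : dotn n Xu Nu = - L1) by lra.
assert (P2 : dotn n Xu Nv = - L2) by lra.
assert (P3 : dotn n Xv Nu = - L2) by lra.
assert (P4 : dotn n Xv Nv = - L3) by lra.
rewrite P1, P3 in M1. rewrite P2, P4 in M2.
rewrite (D2_alg _ W HW); [| reflexivity | exact HvW | exact Huv0 | rewrite Ec1, Ec4, P1, P4; replace L3 with (- L1) by lra; ring].
rewrite Ec2, Ec5, Ec1, Ec4, Ec7, Q1, Q2, M1, M2, P1, P2, P3, P4.
replace L3 with (- L1) by lra.
field. lra.
Qed.


Lemma sumf_const l c : sumf l (fun _ => c) = INR (length l) * c.
Proof. induction l as [|a l IH]; unfold sumf in *; simpl. ring.
  rewrite IH. destruct (length l); simpl; ring. Qed.

Lemma contB_W n X : CkBvec 3 n X -> contB (Wf n X).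
Proof.
intros HX u v Huv. unfold Wf, uncurry2.
apply (cont_dotn n (fun p : R * R => Vu X (fst p) (snd p)) (fun p : R * R => Vu X (fst p) (snd p)));
 intros j Hj; apply (cXl n X 3 (false :: nil) j u v HX Huv Hj); simpl; lia.
Qed.

Lemma contB_T n X Nf phi s : CkBvec 3 n X -> CkBvec 2 n (Nf s) -> C0inf phi ->
  (forall u v, inB u v -> 0 < Wf n X u v) ->
  contB (fun u v => phi u v ^ 2 * ((L11 n X Nf s u v) ^ 2 + (L12 n X Nf s u v) ^ 2) / Wf n X u v).
Proof.
intros HX HN Hphi HW u v Huv. unfold uncurry2.
apply (cR_div (fun p : R * R => phi (fst p) (snd p) ^ 2 * ((L11 n X Nf s (fst p) (snd p)) ^ 2 + (L12 n X Nf s (fst p) (snd p)) ^ 2))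
              (fun p : R * R => Wf n X (fst p) (snd p))).
- apply cR_mult. apply cR_pow2. apply (cphi phi nil); auto.
  apply cR_plus; apply cR_pow2; unfold L11, L12;
    apply (cont_dotn n _ (fun p : R * R => Nf s (fst p) (snd p)));
    intros j Hj.
  + apply (cXl n X 3 (false :: false :: nil) j u v HX Huv Hj); simpl; lia.
  + apply (cXl n (Nf s) 2 nil j u v HN Huv Hj); simpl; lia.
  + apply (cXl n X 3 (true :: false :: nil) j u v HX Huv Hj); simpl; lia.
  + apply (cXl n (Nf s) 2 nil j u v HN Huv Hj); simpl; lia.
- apply (contB_W n X HX u v Huv).
- simpl. apply Rgt_not_eq. apply HW; auto.
Qed.

Lemma contB_Gd phi : C0inf phi -> contB (fun u v => pu phi u v ^ 2 + pv phi u v ^ 2).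
Proof.
intros Hphi u v Huv. unfold uncurry2.
apply cR_plus; apply cR_pow2.
apply (cphi phi (false :: nil)); auto. apply (cphi phi (true :: nil)); auto.
Qed.
Theorem mainTheorem4 (n : nat) (X : R -> R -> nat -> R)
  (Nf : nat -> R -> R -> nat -> R) :
  (3 <= n)%nat ->
  CkBvec 3 n X ->
  (* conformal immersion *)
  (forall u v, inB u v ->
     0 < Wf n X u v /\
     dotn n (Vv X u v) (Vv X u v) = Wf n X u v /\
     dotn n (Vu X u v) (Vv X u v) = 0) ->
  (* C^2 orthonormal normal section N_0, ..., N_{n-3} *)
  (forall s, (s < n - 2)%nat -> CkBvec 2 n (Nf s)) ->
  (forall s, (s < n - 2)%nat -> forall u v, inB u v ->
     dotn n (Vu X u v) (Nf s u v) = 0 /\ dotn n (Vv X u v) (Nf s u v) = 0) ->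
  (forall s w, (s < n - 2)%nat -> (w < n - 2)%nat -> forall u v, inB u v ->
     dotn n (Nf s u v) (Nf w u v) = if Nat.eqb s w then 1 else 0) ->
  (* flat normal bundle: all torsion coefficients vanish *)
  (forall s w, (s < n - 2)%nat -> (w < n - 2)%nat -> s <> w -> forall u v, inB u v ->
     dotn n (Vu (Nf s) u v) (Nf w u v) = 0 /\ dotn n (Vv (Nf s) u v) (Nf w u v) = 0) ->
  (* minimal *)
  (forall s, (s < n - 2)%nat -> forall u v, inB u v ->
     L11 n X Nf s u v + L22 n X Nf s u v = 0) ->
  (* stable *)
  (forall (N : R -> R -> nat -> R) (phi : R -> R -> R),
     CkBvec 2 n N ->
     (forall u v, inB u v ->
        dotn n (Vu X u v) (N u v) = 0 /\ dotn n (Vv X u v) (N u v) = 0 /\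
        dotn n (N u v) (N u v) = 1) ->
     C0inf phi ->
     0 <= Derive_n (fun eps => Area n (vary X eps phi N)) 2 0) ->
  forall mu : R, 0 < mu -> mu <= 2 / INR (n - 2) ->
  forall phi : R -> R -> R, C0inf phi ->
    IntB (fun u v => (pu phi u v) ^ 2 + (pv phi u v) ^ 2)
    >= mu * IntB (fun u v => (- GaussK n X Nf u v) * Wf n X u v * (phi u v) ^ 2).
Proof.
intros Hn HX Hconf HN Hnor Horth Htor Hmin Hstab mu Hmu Hmu2 phi Hphi.
set (Gd := fun u v => pu phi u v ^ 2 + pv phi u v ^ 2).
set (T := fun s u v => phi u v ^ 2 * ((L11 n X Nf s u v) ^ 2 + (L12 n X Nf s u v) ^ 2) / Wf n X u v).
assert (HW : forall u v, inB u v -> 0 < Wf n X u v) by (intros; apply Hconf; auto).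
assert (HcT : forall s, (s < n - 2)%nat -> contB (T s)).
{ intros s Hs. apply contB_T; auto. }
assert (HcG : contB Gd) by (apply contB_Gd; auto).
assert (Hper : forall s, (s < n - 2)%nat -> 0 <= IntB Gd + (-2) * IntB (T s)).
{ intros s Hs.
  assert (Hnorm : forall u v, inB u v -> dotn n (Vu X u v) (Nf s u v) = 0 /\
      dotn n (Vv X u v) (Nf s u v) = 0 /\ dotn n (Nf s u v) (Nf s u v) = 1).
  { intros u v Huv. destruct (Hnor s Hs u v Huv) as [H1 H2]. repeat split; auto.
    rewrite (Horth s s Hs Hs u v Huv), Nat.eqb_refl. reflexivity. }
  assert (H := Hstab (Nf s) phi (HN s Hs) Hnorm Hphi).
  rewrite (second_var n X (Nf s) phi HX (HN s Hs) Hphi Hconf) in H.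
  rewrite (IntB_ext _ (fun u v => Gd u v + (-2) * T s u v)) in H.
  2: { intros u v Huv. rewrite (D2_geom n X Nf phi s u v); auto. unfold Gd, T. field.
       apply Rgt_not_eq, HW; auto. }
  rewrite IntB_plus, IntB_scal in H; auto. apply contB_scal; auto. }
assert (Hsum : 0 <= sumf (seq 0 (n - 2)) (fun s => IntB Gd + (-2) * IntB (T s))).
{ apply sumf_ge0. intros s Hs. apply in_seq0 in Hs. apply Hper; auto. }
rewrite sumf_plus, sumf_const, sumf_scal, length_seq in Hsum.
rewrite <- IntB_sumf in Hsum.
2: { intros s Hs. apply in_seq0 in Hs. apply HcT; auto. }
set (Zt := IntB (fun u v => sumf (seq 0 (n - 2)) (fun s => T s u v))) in *.
assert (HZ : IntB (fun u v => - GaussK n X Nf u v * Wf n X u v * phi u v ^ 2) = Zt).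
{ unfold Zt. apply IntB_ext. intros u v Huv. unfold GaussK.
  fold (sumf (seq 0 (n - 2)) (fun s => (L11 n X Nf s u v * L22 n X Nf s u v - L12 n X Nf s u v ^ 2) / Wf n X u v ^ 2)).
  replace (- sumf (seq 0 (n - 2)) (fun s => (L11 n X Nf s u v * L22 n X Nf s u v - L12 n X Nf s u v ^ 2) / Wf n X u v ^ 2) *
            Wf n X u v * phi u v ^ 2)
    with ((- Wf n X u v * phi u v ^ 2) * sumf (seq 0 (n - 2)) (fun s => (L11 n X Nf s u v * L22 n X Nf s u v - L12 n X Nf s u v ^ 2) / Wf n X u v ^ 2)) by ring.
  rewrite <- sumf_scal. apply sumf_ext. intros s Hs. apply in_seq0 in Hs.
  unfold T. replace (L22 n X Nf s u v) with (- L11 n X Nf s u v).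
  2: { assert (H := Hmin s Hs u v Huv). lra. }
  field. apply Rgt_not_eq, HW; auto. }
rewrite HZ.
assert (HZ0 : 0 <= Zt).
{ unfold Zt. apply IntB_ge0. apply contB_sumf. intros s Hs. apply in_seq0 in Hs. apply HcT; auto.
  intros u v Huv. apply sumf_ge0. intros s Hs. unfold T.
  apply Rmult_le_pos. apply Rmult_le_pos. apply pow2_ge_0.
  apply Rplus_le_le_0_compat; apply pow2_ge_0.
  apply Rlt_le, Rinv_0_lt_compat, HW; auto. }
assert (Hn2 : 0 < INR (n - 2)) by (apply lt_0_INR; lia).
assert (Hm : mu * Zt <= 2 / INR (n - 2) * Zt) by (apply Rmult_le_compat_r; auto).
assert (E : 2 / INR (n - 2) * Zt * INR (n - 2) = 2 * Zt) by (field; lra).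
apply Rle_ge.
apply Rle_trans with (2 / INR (n - 2) * Zt); auto.
apply Rmult_le_reg_r with (INR (n - 2)); auto.
rewrite E. lra.
Qed.
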